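(* Let $A\in\mathbb{R}^{n\times n}$ be Metzler, $J\in\mathbb{R}^{n\times n}$ be nonnegative and $\bar T>0$. The following statements are equivalent: (a) The impulsive system is asymptotically stable under constant dwell-time $\bar T$ (i.e. when $T_k=\bar T$ for all $k$). (b) There exist $\lambda\in\mathbb{R}^n_{>0}$ and $\mu\in\mathbb{R}^n_{>0}$ such that, with $V(x)=\lambda^\top x$, one has $V(Je^{A\bar T}x)-V(x)\le-\mu^\top x$ for all $x\in\mathbb{R}^n_{\ge0}$ (i.e. $V(x(t_{k+1}^+))-V(x(t_k^+))\le -\mu^\top x(t_k^+)$ along all trajectories). (c) There exists $\lambda\in\mathbb{R}^n_{>0}$ such that $\lambda^\top(Je^{A\bar T}-I_n)<0$; equivalently, $Je^{A\bar T}$ is Schur stable. (d) There exists $\lambda\in\mathbb{R}^n_{>0}$ such that $(Je^{A\bar T}-I_n)\lambda<0$; equivalently, $e^{A^\top\bar T}J^\top$ is Schur stable. (e) There exist a differentiable function $\zeta:[0,\bar T]\to\mathbb{R}^n$ with $\zeta(\bar T)\in\mathbb{R}^n_{>0}$ and a scalar $\varepsilon>0$ such that $\zeta(\tau)^\top A-\dot\zeta(\tau)^\top\le 0$ for all $\tau\in[0,\bar T]$ and $\zeta(\bar T)^\top J-\zeta(0)^\top+\varepsilon\mathbf{1}_n^\top\le0$. (f) There exist a differentiable function $\xi:[0,\bar T]\to\mathbb{R}^n$ with $\xi(0)\in\mathbb{R}^n_{>0}$ and a scalar $\varepsilon>0$ such that $\xi(\tau)^\top A+\dot\xi(\tau)^\top\le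 0$ for all $\tau\in[0,\bar T]$ and $\xi(0)^\top J-\xi(\bar T)^\top+\varepsilon\mathbf{1}_n^\top\le0$.
   Context: Consider the linear impulsive system $\dot x(t)=Ax(t)$ for $t\neq t_k$, $x(t_k^+)=Jx(t_k)$, $x(t_0)=x_0$, where $x(t)\in\mathbb{R}^n$, $x(t^+):=\lim_{s\downarrow t}x(s)$, and the impulse times $\{t_k\}_{k\in\mathbb{N}}$ are strictly increasing with $t_k\to\infty$; $T_k:=t_{k+1}-t_k$. A matrix is Metzler if its off-diagonal entries are nonnegative, nonnegative if all entries are nonnegative, and Schur stable if its spectral radius is $<1$. Vector inequalities are componentwise; $\mathbf{1}_n$ is the $n$-vector of ones. The system is asymptotically stable under a given dwell-time constraint if its zero solution is globally asymptotically stable for every impulse sequence whose dwell-times satisfy the constraint. *)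

(* Defs.v *)
(* classical reals. Vectors of R^n are functions nat -> R and
   n x n matrices are functions nat -> nat -> R; only indices < n matter. *)
From Stdlib Require Import Reals Factorial ClassicalEpsilon.
Open Scope R_scope.

Definition vec := nat -> R.
Definition mat := nat -> nat -> R.

Fixpoint rsum (n : nat) (f : nat -> R) : R :=
  match n with O => 0 | S k => rsum k f + f k end.

Definition idm : mat := fun i j => if Nat.eq_dec i j then 1 else 0.
Definition mtr (M : mat) : mat := fun i j => M j i.
Definition mscale (c : R) (M : mat) : mat := fun i j => c * M i j.
Definition msub (M N : mat) : mat := fun i j => M i j - N i j.
Definition mmul (n : nat) (M N : mat) : mat :=
  fun i j => rsum n (fun k => M i k * N k j).
Definition mvec (n : nat) (M : mat) (x : vec) : vec :=
  fun i => rsum n (fun j => M i j * x j).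
Definition vmat (n : nat) (l : vec) (M : mat) : vec :=
  fun j => rsum n (fun i => l i * M i j).
Definition dot (n : nat) (l x : vec) : R := rsum n (fun i => l i * x i).
Definition vnorm (n : nat) (x : vec) : R := rsum n (fun i => Rabs (x i)).

Fixpoint mpow (n : nat) (M : mat) (k : nat) : mat :=
  match k with O => idm | S k' => mmul n M (mpow n M k') end.

(* Matrix exponential e^M = sum_k M^k / k!, entrywise (the series always
   converges; the value is selected by Hilbert's epsilon). *)
Definition mexp (n : nat) (M : mat) : mat := fun i j =>
  epsilon (inhabits 0)
    (fun l => infinite_sum (fun k => mpow n M k i j / INR (Factorial.fact k)) l).

Definition Metzler (n : nat) (A : mat) : Prop :=
  forall i j, (i < n)%nat -> (j < n)%nat -> i <> j -> 0 <= A i j.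
Definition nonneg_mat (n : nat) (J : mat) : Prop :=
  forall i j, (i < n)%nat -> (j < n)%nat -> 0 <= J i j.
Definition pos_vec (n : nat) (x : vec) : Prop :=
  forall i, (i < n)%nat -> 0 < x i.
Definition nonneg_vec (n : nat) (x : vec) : Prop :=
  forall i, (i < n)%nat -> 0 <= x i.
Definition neg_vec (n : nat) (x : vec) : Prop :=
  forall i, (i < n)%nat -> x i < 0.

(* Schur stability: spectral radius < 1, i.e. every (complex) eigenvalue
   alpha + i beta of M, with eigenvector a + i b <> 0, has modulus < 1.
   The complex eigen-equation M(a+ib) = (alpha+i beta)(a+ib) is written
   out in real and imaginary parts. *)
Definition Schur_stable (n : nat) (M : mat) : Prop :=
  forall (a b : vec) (alpha beta : R),
    (exists i, (i < n)%nat /\ (a i <> 0 \/ b i <> 0)) ->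
    (forall i, (i < n)%nat -> mvec n M a i = alpha * a i - beta * b i) ->
    (forall i, (i < n)%nat -> mvec n M b i = beta * a i + alpha * b i) ->
    alpha * alpha + beta * beta < 1.

(* Solution of the impulsive system xdot = A x (t <> t_k),
   x(t_k^+) = J x(t_k), x(t_0) = x0, on [t_0, +oo), where the initial time
   is t_0 = tk 0.  Between impulses the solution is differentiable and
   satisfies the ODE, it is left-continuous at each t_{k+1}, and its right
   limit at t_k equals J x(t_k). *)
Definition is_solution (n : nat) (A J : mat) (tk : nat -> R) (x0 : vec)
    (x : R -> vec) : Prop :=
  (forall i, (i < n)%nat -> x (tk 0%nat) i = x0 i) /\
  (forall k s, tk k < s < tk (S k) -> forall i, (i < n)%nat ->
     derivable_pt_lim (fun r => x r i) s (mvec n A (x s) i)) /\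
  (forall k i, (i < n)%nat ->
     limit1_in (fun r => x r i) (fun r => tk k < r < tk (S k))
               (x (tk (S k)) i) (tk (S k))) /\
  (forall k i, (i < n)%nat ->
     limit1_in (fun r => x r i) (fun r => tk k < r < tk (S k))
               (mvec n J (x (tk k)) i) (tk k)).

Definition GAS (n : nat) (A J : mat) (tk : nat -> R) : Prop :=
  (forall eps, 0 < eps -> exists delta, 0 < delta /\
     forall x0 x, is_solution n A J tk x0 x -> vnorm n x0 < delta ->
       forall t, tk 0%nat <= t -> vnorm n (x t) < eps) /\
  (forall x0 x, is_solution n A J tk x0 x ->
     forall eps, 0 < eps -> exists T, forall t, T <= t -> vnorm n (x t) < eps).

(* Asymptotic stability under constant dwell-time Tbar: GAS for every impulse
   sequence with t_{k+1} - t_k = Tbar for all k (strict increase and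
   t_k -> oo follow from Tbar > 0). *)
Definition AS_constant_dwell (n : nat) (A J : mat) (Tbar : R) : Prop :=
  forall tk : nat -> R, (forall k, tk (S k) - tk k = Tbar) -> GAS n A J tk.

(* f : [a,b] -> R has derivative f' on [a,b] (one-sided at the endpoints). *)
Definition deriv_on (a b : R) (f f' : R -> R) : Prop :=
  forall tau, a <= tau <= b ->
    limit1_in (fun s => (f s - f tau) / (s - tau))
              (fun s => a <= s <= b /\ s <> tau) (f' tau) tau.

(* Main.v *)
Require Import Defs.
From Stdlib Require Import Reals Lra Lia Factorial ClassicalEpsilon ZArith.
From Coquelicot Require Import Coquelicot.
From mathcomp Require all_boot all_algebra Rstruct.
Open Scope R_scope.

Lemma rsum_ext n f g : (forall i, (i<n)%nat -> f i = g i) -> rsum n f = rsum n g.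
Proof. induction n; simpl; intros H; auto. rewrite IHn by (intros; apply H; lia). rewrite (H n) by lia. auto. Qed.
Lemma rsum_plus n f g : rsum n (fun i => f i + g i) = rsum n f + rsum n g.
Proof. induction n; simpl; [ring|]. rewrite IHn; ring. Qed.
Lemma rsum_scal n c f : rsum n (fun i => c * f i) = c * rsum n f.
Proof. induction n; simpl; [ring|]. rewrite IHn; ring. Qed.
Lemma rsum_scal_r n c f : rsum n (fun i => f i * c) = rsum n f * c.
Proof. induction n; simpl; [ring|]. rewrite IHn; ring. Qed.
Lemma rsum_minus n f g : rsum n (fun i => f i - g i) = rsum n f - rsum n g.
Proof. induction n; simpl; [ring|]. rewrite IHn; ring. Qed.
Lemma rsum_zero n : rsum n (fun _ => 0) = 0.
Proof. induction n; simpl; [ring|]. rewrite IHn; ring. Qed.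
Lemma rsum_zero' n f : (forall i, (i<n)%nat -> f i = 0) -> rsum n f = 0.
Proof. intros H; rewrite (rsum_ext n f (fun _ => 0)) by auto; apply rsum_zero. Qed.
Lemma rsum_le n f g : (forall i, (i<n)%nat -> f i <= g i) -> rsum n f <= rsum n g.
Proof. induction n; simpl; intros H; [lra|]. assert (f n <= g n) by (apply H; lia).
 assert (rsum n f <= rsum n g) by (apply IHn; intros; apply H; lia). lra. Qed.
Lemma rsum_nonneg n f : (forall i, (i<n)%nat -> 0 <= f i) -> 0 <= rsum n f.
Proof. intros H. rewrite <- (rsum_zero n). apply rsum_le; auto. Qed.
Lemma rsum_lt n f g : (forall i, (i<n)%nat -> f i <= g i) ->
  (exists i, (i<n)%nat /\ f i < g i) -> rsum n f < rsum n g.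
Proof. induction n; simpl; intros H [i [Hi Hl]]; [lia|].
 assert (f n <= g n) by (apply H; lia).
 destruct (Nat.eq_dec i n) as [->|ne].
 - assert (rsum n f <= rsum n g) by (apply rsum_le; intros; apply H; lia). lra.
 - assert (rsum n f < rsum n g). { apply IHn. intros; apply H; lia. exists i; split; auto; lia. } lra. Qed.
Lemma rsum_abs n f : Rabs (rsum n f) <= rsum n (fun i => Rabs (f i)).
Proof. induction n; simpl. rewrite Rabs_R0; lra.
 eapply Rle_trans. apply Rabs_triang. lra. Qed.
Lemma rsum_swap n m f : rsum n (fun i => rsum m (fun j => f i j)) = rsum m (fun j => rsum n (fun i => f i j)).
Proof. induction n; simpl. rewrite rsum_zero; auto. rewrite IHn, <- rsum_plus. auto. Qed.
Lemma rsum_term_le n f k : (forall i, (i<n)%nat -> 0 <= f i) -> (k < n)%nat -> f k <= rsum n f.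
Proof. induction n; simpl; intros H Hk; [lia|].
 assert (0 <= rsum n f) by (apply rsum_nonneg; intros; apply H; lia).
 destruct (Nat.eq_dec k n) as [->|ne]. lra.
 assert (f k <= rsum n f) by (apply IHn; [intros; apply H; lia| lia]).
 assert (0 <= f n) by (apply H; lia). lra. Qed.
Lemma rsum_delta_r n f k : (k < n)%nat -> rsum n (fun j => f j * idm j k) = f k.
Proof. induction n; simpl; intros Hk; [lia|]. unfold idm at 2.
 destruct (Nat.eq_dec n k) as [->|ne].
 - rewrite rsum_zero'. ring. intros i Hi. unfold idm. destruct (Nat.eq_dec i k); [lia|ring].
 - rewrite IHn by lia. ring. Qed.
Lemma rsum_delta_l n f k : (k < n)%nat -> rsum n (fun j => idm k j * f j) = f k.
Proof. intros Hk. rewrite <- (rsum_delta_r n f k Hk). apply rsum_ext. intros i _.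
 unfold idm. destruct (Nat.eq_dec k i), (Nat.eq_dec i k); subst; try ring; lia. Qed.
Lemma rsum_split_last n f : rsum (S n) f = rsum n f + f n.
Proof. reflexivity. Qed.
Lemma rsum_shift n f : rsum (S n) f = f 0%nat + rsum n (fun i => f (S i)).
Proof. induction n. simpl. ring. rewrite rsum_split_last, IHn. simpl. ring. Qed.

Lemma mmul_assoc n M N P i j : mmul n (mmul n M N) P i j = mmul n M (mmul n N P) i j.
Proof. unfold mmul. transitivity (rsum n (fun l => rsum n (fun k => M i k * N k l * P l j))).
 apply rsum_ext; intros; rewrite <- rsum_scal_r; apply rsum_ext; intros; ring.
 rewrite rsum_swap. apply rsum_ext; intros. rewrite <- rsum_scal. apply rsum_ext; intros; ring. Qed.
Lemma mmul_ext n M M' N N' i j : (forall k, (k<n)%nat -> M i k = M' i k) ->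
  (forall k, (k<n)%nat -> N k j = N' k j) -> mmul n M N i j = mmul n M' N' i j.
Proof. intros H1 H2. unfold mmul. apply rsum_ext; intros. rewrite H1, H2; auto. Qed.
Lemma mmul_idm_l n M i j : (i<n)%nat -> mmul n idm M i j = M i j.
Proof. intros; unfold mmul; apply (rsum_delta_l n (fun l => M l j)); auto. Qed.
Lemma mmul_idm_r n M i j : (j<n)%nat -> mmul n M idm i j = M i j.
Proof. intros; unfold mmul; apply (rsum_delta_r n (M i)); auto. Qed.
Lemma mpow_S_r n M k i j : (i<n)%nat -> (j<n)%nat -> mpow n M (S k) i j = mmul n (mpow n M k) M i j.
Proof. revert i j; induction k; intros i j Hi Hj.
 - simpl. rewrite mmul_idm_r, mmul_idm_l; auto.
 - change (mpow n M (S (S k)) i j) with (mmul n M (mpow n M (S k)) i j).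
   rewrite (mmul_ext n M M (mpow n M (S k)) (mmul n (mpow n M k) M)); auto.
   rewrite <- mmul_assoc. apply mmul_ext; auto. Qed.
Lemma mpow_add n M a b i j : (i<n)%nat -> (j<n)%nat ->
  mpow n M (a + b) i j = mmul n (mpow n M a) (mpow n M b) i j.
Proof. revert i j; induction a; intros i j Hi Hj.
 - simpl. rewrite mmul_idm_l; auto.
 - simpl. rewrite mmul_assoc. apply mmul_ext; auto. Qed.
Lemma mpow_tr n M k i j : (i<n)%nat -> (j<n)%nat -> mpow n (mtr M) k i j = mpow n M k j i.
Proof. revert i j; induction k; intros i j Hi Hj.
 - simpl. unfold idm. destruct (Nat.eq_dec i j), (Nat.eq_dec j i); subst; auto; lia.
 - rewrite mpow_S_r by auto. simpl. unfold mmul. apply rsum_ext; intros. rewrite IHk by auto. unfold mtr. ring. Qed.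
Lemma mvec_mmul n M N x i : mvec n (mmul n M N) x i = mvec n M (mvec n N x) i.
Proof. unfold mvec, mmul. transitivity (rsum n (fun j => rsum n (fun k => M i k * N k j * x j))).
 apply rsum_ext; intros; rewrite Rmult_comm, <- rsum_scal; apply rsum_ext; intros; ring.
 rewrite rsum_swap. apply rsum_ext; intros. rewrite <- rsum_scal. apply rsum_ext; intros; ring. Qed.
Lemma vmat_mmul n l M N j : vmat n l (mmul n M N) j = vmat n (vmat n l M) N j.
Proof. unfold vmat, mmul. transitivity (rsum n (fun i => rsum n (fun k => l i * M i k * N k j))).
 apply rsum_ext; intros; rewrite <- rsum_scal; apply rsum_ext; intros; ring.
 rewrite rsum_swap. apply rsum_ext; intros. rewrite Rmult_comm, <- rsum_scal. apply rsum_ext; intros; ring. Qed.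
Lemma mvec_ext n M N x y i : (forall j, (j<n)%nat -> M i j = N i j) -> (forall j, (j<n)%nat -> x j = y j) ->
  mvec n M x i = mvec n N y i.
Proof. intros H1 H2; unfold mvec; apply rsum_ext; intros; rewrite H1, H2; auto. Qed.
Lemma vmat_ext n M N x y j : (forall i, (i<n)%nat -> M i j = N i j) -> (forall i, (i<n)%nat -> x i = y i) ->
  vmat n x M j = vmat n y N j.
Proof. intros H1 H2; unfold vmat; apply rsum_ext; intros; rewrite H1, H2; auto. Qed.

Definition msz (n : nat) (M : mat) : R := rsum n (fun i => rsum n (fun j => Rabs (M i j))).
Lemma msz_nonneg n M : 0 <= msz n M.
Proof. unfold msz. apply rsum_nonneg; intros; apply rsum_nonneg; intros; apply Rabs_pos. Qed.
Lemma msz_entry n M i j : (i<n)%nat -> (j<n)%nat -> Rabs (M i j) <= msz n M.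
Proof. intros. unfold msz. eapply Rle_trans; [|apply (rsum_term_le n _ i)]; auto.
 apply (rsum_term_le n (fun j => Rabs (M i j))); auto. intros; apply Rabs_pos.
 intros; apply rsum_nonneg; intros; apply Rabs_pos. Qed.
Lemma msz_row n M i : (i<n)%nat -> rsum n (fun j => Rabs (M i j)) <= msz n M.
Proof. intros. unfold msz. apply (rsum_term_le n (fun i => rsum n (fun j => Rabs (M i j)))); auto.
 intros; apply rsum_nonneg; intros; apply Rabs_pos. Qed.
Lemma msz_col n M j : (j<n)%nat -> rsum n (fun i => Rabs (M i j)) <= msz n M.
Proof. intros. unfold msz. rewrite rsum_swap. apply (rsum_term_le n (fun j => rsum n (fun i => Rabs (M i j)))); auto.
 intros; apply rsum_nonneg; intros; apply Rabs_pos. Qed.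
Lemma mpow_bound n M k i j : (i<n)%nat -> (j<n)%nat -> Rabs (mpow n M k i j) <= (msz n M) ^ k.
Proof. revert i j; induction k; intros i j Hi Hj.
 - simpl. unfold idm. destruct (Nat.eq_dec i j); rewrite ?Rabs_R1, ?Rabs_R0; lra.
 - simpl. unfold mmul. eapply Rle_trans. apply rsum_abs.
   eapply Rle_trans. apply (rsum_le _ _ (fun l => Rabs (M i l) * msz n M ^ k)).
   intros l Hl. rewrite Rabs_mult. apply Rmult_le_compat_l. apply Rabs_pos. auto.
   rewrite rsum_scal_r. apply Rmult_le_compat_r. apply pow_le, msz_nonneg. apply msz_row; auto. Qed.
Lemma rsum_const n c : rsum n (fun _ => c) = INR n * c.
Proof. induction n; simpl rsum. simpl; ring. rewrite IHn, S_INR; ring. Qed.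
Lemma inv_lt1 x : 1 < x -> / x < 1.
Proof. intros H. pose proof (Rinv_1_lt_contravar 1 x ltac:(lra) H). rewrite Rinv_1 in H0. exact H0. Qed.

Module Br.
Import all_boot all_algebra Rstruct.
Import GRing.Theory.
Local Open Scope ring_scope.

Lemma rsum_big (n : nat) (f : nat -> R) : rsum n f = (\sum_(i < n) f i)%R.
Proof.
elim: n => [|n IH] /=; first by rewrite big_ord0.
by rewrite big_ord_recr /= IH.
Qed.

Lemma bridge_mc (n:nat) (P : nat -> nat -> R) :
 (exists y : nat -> R, (exists i, (i<n)%coq_nat /\ y i <> 0) /\
    forall i, (i<n)%coq_nat -> rsum n (fun j => P i j * y j) = 0)
 \/ (exists B : nat -> nat -> R, forall i j, (i<n)%coq_nat -> (j<n)%coq_nat ->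
      rsum n (fun k => P i k * B k j) = idm i j).
Proof.
case: n P => [|n] P.
  by right; exists (fun _ _ => 0) => i j /ltP.
pose Pm : 'M[R]_n.+1 := \matrix_(i < n.+1, j < n.+1) P i j.
case: (eqVneq (\det Pm^T) 0%R) => hd.
- left. move/eqP: hd => /det0P [v nv hv].
  exists (fun k => if (k < n.+1)%N then v ord0 (inord k) else 0).
  split.
  + move/negP: nv => hnz.
    have [j hj] : exists j, v ord0 j <> 0.
      apply: Classical_Prop.NNPP; move=> H; apply: hnz; apply/eqP/matrixP => i j.
      rewrite (ord1 i) mxE; apply: Classical_Prop.NNPP; move=> H2; apply: H; by exists j.
    exists j; split; first by apply/ltP.
    by rewrite ltn_ord inord_val.
  + move=> i /ltP hi.
    have := congr1 (fun M : 'M[R]_(1, n.+1) => M ord0 (Ordinal hi)) hv.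
    move=> H; rewrite !mxE in H; rewrite rsum_big; apply: (eq_trans _ H).
    apply: eq_bigr => k _. by rewrite ltn_ord inord_val !mxE mulrC.
- right.
  have hu : Pm \in unitmx by rewrite unitmxE unitfE -det_tr.
  exists (fun k j => (invmx Pm) (inord k) (inord j)).
  move=> i j /ltP hi /ltP hj.
  rewrite rsum_big.
  transitivity ((Pm *m invmx Pm) (Ordinal hi) (Ordinal hj)).
  + rewrite mxE; apply: eq_bigr => k _. rewrite mxE inord_val; congr (_ * invmx Pm _ _); apply: val_inj; by rewrite /= inordK.
  + rewrite (mulmxV hu) mxE /= /idm.
    case: (Nat.eq_dec i j) => [e|ne].
      have -> : Ordinal hi = Ordinal hj by apply: val_inj; exact: e.
      by rewrite eqxx.
    case: eqP => // [[e]]; by case: ne.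
Qed.
End Br.

Lemma bridge (n:nat) (P : nat -> nat -> R) :
 (exists y : nat -> R, (exists i, (i<n)%nat /\ y i <> 0) /\
    forall i, (i<n)%nat -> rsum n (fun j => P i j * y j) = 0)
 \/ (exists B : nat -> nat -> R, forall i j, (i<n)%nat -> (j<n)%nat ->
      rsum n (fun k => P i k * B k j) = idm i j).
Proof. exact (Br.bridge_mc n P). Qed.


Definition Rc n N := exists x, pos_vec n x /\ forall i, (i<n)%nat -> mvec n N x i < x i.
Definition Lc n N := exists l, pos_vec n l /\ forall j, (j<n)%nat -> vmat n l N j < l j.
Definition Dk n N := forall eps, 0 < eps -> exists K, forall i j, (i<n)%nat -> (j<n)%nat ->
   Rabs (mpow n N K i j) < eps.

Lemma fin_min n g : (forall j, (j<n)%nat -> 0 < g j) -> exists e, 0 < e /\ forall j, (j<n)%nat -> e <= g j.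
Proof. induction n; intros H. exists 1; split; [lra|intros; lia].
 destruct IHn as [e [He H2]]. intros; apply H; lia.
 exists (Rmin e (g n)). split. apply Rmin_pos; [auto| apply H; lia].
 intros j Hj. destruct (Nat.eq_dec j n) as [->|ne]. apply Rmin_r.
 eapply Rle_trans. apply Rmin_l. apply H2; lia. Qed.

Lemma fin_max_nat n (P : nat -> nat -> Prop) : (forall j, (j<n)%nat -> exists K, forall k, (K <= k)%nat -> P j k) ->
  exists K, forall j k, (j<n)%nat -> (K <= k)%nat -> P j k.
Proof. induction n; intros H. exists 0%nat; intros; lia.
 destruct IHn as [K1 H1]. intros; apply H; lia. destruct (H n) as [K2 H2]. lia.
 exists (max K1 K2). intros j k Hj Hk. destruct (Nat.eq_dec j n) as [->|ne]. apply H2; lia. apply H1; lia. Qed.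

Lemma mpow_nonneg n N k i j : nonneg_mat n N -> (i<n)%nat -> (j<n)%nat -> 0 <= mpow n N k i j.
Proof. intros HN; revert i j; induction k; intros i j Hi Hj; simpl.
 unfold idm; destruct (Nat.eq_dec i j); lra.
 unfold mmul. apply rsum_nonneg; intros. apply Rmult_le_pos; auto. Qed.

Lemma mvec_mono n N x y i : nonneg_mat n N -> (i<n)%nat -> (forall j, (j<n)%nat -> x j <= y j) ->
  mvec n N x i <= mvec n N y i.
Proof. intros. unfold mvec. apply rsum_le; intros. apply Rmult_le_compat_l; auto. Qed.

Lemma mvec_scal n N c x i : mvec n N (fun j => c * x j) i = c * mvec n N x i.
Proof. unfold mvec. rewrite <- rsum_scal. apply rsum_ext; intros; ring. Qed.

Lemma pos_sum_ge n x i : pos_vec n x -> (i<n)%nat -> x i <= rsum n x.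
Proof. intros H Hi. apply (rsum_term_le n x i); auto. intros; apply Rlt_le, H; auto. Qed.

Lemma Rc_geo n N : nonneg_mat n N -> Rc n N ->
  exists s c, 0 <= s < 1 /\ 0 <= c /\ forall k i j, (i<n)%nat -> (j<n)%nat -> mpow n N k i j <= c * s ^ k.
Proof. intros HN [x [Hx Hl]].
 destruct n as [|n']. exists 0, 0. split; [lra|split;[lra|]]. intros; lia.
 set (n := S n') in *.
 destruct (fin_min n (fun i => x i - mvec n N x i)) as [e [He He2]]. intros; specialize (Hl j H); lra.
 destruct (fin_min n x) as [m [Hm Hm2]]. intros; apply Hx; auto.
 set (X := rsum n x).
 assert (HX : x 0%nat <= X) by (apply pos_sum_ge; auto; unfold n; lia).
 assert (Hx0 : 0 < x 0%nat) by (apply Hx; unfold n; lia).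
 assert (HeX : e <= X). { specialize (He2 0%nat ltac:(unfold n; lia)).
   assert (0 <= mvec n N x 0%nat). unfold mvec; apply rsum_nonneg; intros; apply Rmult_le_pos; [apply HN; unfold n; lia| apply Rlt_le, Hx; auto]. lra. }
 set (s := 1 - e / X).
 assert (Hs : 0 <= s < 1). { unfold s. split. assert (e / X <= 1). { apply (Rmult_le_reg_r X); [lra|]. unfold Rdiv; rewrite Rmult_assoc, Rinv_l; lra. } lra.
   assert (0 < e / X) by (apply Rdiv_lt_0_compat; lra). lra. }
 assert (Hstep : forall i, (i<n)%nat -> mvec n N x i <= s * x i).
 { intros i Hi. specialize (He2 i Hi). assert (x i <= X) by (apply pos_sum_ge; auto).
   unfold s. assert (e * x i / X <= e). { unfold Rdiv. rewrite Rmult_assoc. rewrite <- (Rmult_1_r e) at 2.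
     apply Rmult_le_compat_l; [lra|]. apply (Rmult_le_reg_r X); [lra|]. rewrite Rmult_assoc, Rinv_l; lra. }
   replace ((1 - e / X) * x i) with (x i - e * x i / X) by (field; lra). lra. }
 assert (Hk : forall k i, (i<n)%nat -> mvec n (mpow n N k) x i <= s ^ k * x i).
 { induction k; intros i Hi. simpl. unfold mvec. rewrite (rsum_delta_l n x i Hi). lra.
   simpl (mpow n N (S k)). rewrite mvec_mmul.
   eapply Rle_trans. apply (mvec_mono n N _ (fun j => s ^ k * x j)); auto.
   rewrite mvec_scal. simpl. specialize (Hstep i Hi). assert (0 <= s ^ k) by (apply pow_le; lra).
   apply Rle_trans with (s ^ k * (s * x i)); [apply Rmult_le_compat_l; auto| right; ring]. }
 exists s, (X / m). split; auto. split. apply Rlt_le, Rdiv_lt_0_compat; lra.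
 intros k i j Hi Hj.
 assert (H1 : mpow n N k i j * x j <= s ^ k * x i).
 { eapply Rle_trans; [|apply Hk; auto]. unfold mvec.
   apply (rsum_term_le n (fun j => mpow n N k i j * x j) j); auto. intros; apply Rmult_le_pos.
   apply mpow_nonneg; auto. apply Rlt_le, Hx; auto. }
 assert (Hxj : m <= x j) by auto. assert (Hxi : x i <= X) by (apply pos_sum_ge; auto).
 assert (0 <= s ^ k) by (apply pow_le; lra).
 assert (0 <= mpow n N k i j) by (apply mpow_nonneg; auto).
 assert (mpow n N k i j * m <= s ^ k * X).
 { eapply Rle_trans. apply Rmult_le_compat_l; eauto. eapply Rle_trans; eauto. apply Rmult_le_compat_l; auto. }
 apply (Rmult_le_reg_r m); auto. replace (X / m * s ^ k * m) with (s ^ k * X) by (field; lra). lra. Qed.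

Lemma geo_Dk n N : (exists s c, 0 <= s < 1 /\ 0 <= c /\ forall k i j, (i<n)%nat -> (j<n)%nat ->
   0 <= mpow n N k i j <= c * s ^ k) -> Dk n N.
Proof. intros [s [c [Hs [Hc H]]]] eps Heps.
 destruct (pow_lt_1_zero s ltac:(rewrite Rabs_pos_eq; lra) (eps / (c+1)) ltac:(apply Rdiv_lt_0_compat; lra)) as [K HK].
 exists K. intros i j Hi Hj. specialize (H K i j Hi Hj). specialize (HK K (Nat.le_refl _)).
 rewrite Rabs_pos_eq in HK by (apply pow_le; lra). rewrite Rabs_pos_eq by lra.
 assert (c * s ^ K <= (c + 1) * s ^ K) by (apply Rmult_le_compat_r; [apply pow_le|]; lra).
 assert ((c+1) * s ^ K < eps). { apply (Rmult_lt_reg_r (/ (c+1))). apply Rinv_0_lt_compat; lra.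
   replace ((c+1) * s ^ K * / (c+1)) with (s ^ K) by (field; lra). exact HK. }
 lra. Qed.

Lemma Rc_Dk n N : nonneg_mat n N -> Rc n N -> Dk n N.
Proof. intros HN HR. destruct (Rc_geo n N HN HR) as [s [c [Hs [Hc H]]]]. apply geo_Dk.
 exists s, c. split; [auto|split;[auto|]]. intros; split; [apply mpow_nonneg|apply H]; auto. Qed.

Lemma nonneg_tr n N : nonneg_mat n N -> nonneg_mat n (mtr N).
Proof. intros H i j Hi Hj; unfold mtr; auto. Qed.

Lemma Lc_Rc_tr n N : Lc n N <-> Rc n (mtr N).
Proof. split; intros [x [Hx H]]; exists x; split; auto; intros i Hi; specialize (H i Hi);
 [ replace (mvec n (mtr N) x i) with (vmat n x N i) | replace (vmat n x N i) with (mvec n (mtr N) x i)]; auto;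
 unfold mvec, vmat, mtr; apply rsum_ext; intros; ring. Qed.

Lemma Dk_tr n N : Dk n N -> Dk n (mtr N).
Proof. intros H eps He. destruct (H eps He) as [K HK]. exists K. intros. rewrite mpow_tr; auto. Qed.

Lemma Lc_Dk n N : nonneg_mat n N -> Lc n N -> Dk n N.
Proof. intros HN HL. apply Lc_Rc_tr in HL. apply Rc_Dk in HL; [|apply nonneg_tr; auto].
 intros eps He. destruct (HL eps He) as [K HK]. exists K. intros i j Hi Hj.
 rewrite <- mpow_tr; auto. Qed.

Definition onev : vec := fun _ => 1.

Lemma mvec_rsum n M K (f : nat -> vec) i :
  mvec n M (fun j => rsum K (fun r => f r j)) i = rsum K (fun r => mvec n M (f r) i).
Proof. unfold mvec. rewrite <- rsum_swap. apply rsum_ext; intros. rewrite <- rsum_scal; auto. Qed.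

Lemma Dk_Rc n N : nonneg_mat n N -> Dk n N -> Rc n N.
Proof. intros HN HD.
 destruct n as [|n']. exists onev; split; intros i Hi; simpl in Hi; lia.
 set (n := S n') in *.
 destruct (HD (/ (INR n + 1))) as [K HK]. apply Rinv_0_lt_compat; pose proof (pos_INR n); lra.
 destruct K as [|K'].
 { exfalso. specialize (HK 0%nat 0%nat ltac:(unfold n; lia) ltac:(unfold n; lia)). cbn [mpow] in HK.
   unfold idm in HK. destruct (Nat.eq_dec 0 0); [|lia]. rewrite Rabs_R1 in HK.
   assert (1 <= INR n). unfold n. rewrite S_INR. pose proof (pos_INR n'); lra.
   assert (/ (INR n + 1) < 1) by (apply inv_lt1; lra). lra. }
 set (K := S K') in *.
 set (f := fun r i => mvec n (mpow n N r) onev i).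
 exists (fun i => rsum K (fun r => f r i)). split.
 - intros i Hi. unfold K. rewrite rsum_shift. unfold f at 1. simpl. unfold mvec. rewrite (rsum_delta_l n onev i Hi).
   assert (0 <= rsum K' (fun r => f (S r) i)). apply rsum_nonneg; intros. unfold f, mvec. apply rsum_nonneg; intros.
   unfold onev. rewrite Rmult_1_r. apply mpow_nonneg; auto. unfold onev; lra.
 - intros i Hi. rewrite mvec_rsum.
   assert (E : rsum K (fun r => mvec n N (f r) i) = rsum K (fun r => f (S r) i)).
   { apply rsum_ext. intros r _. unfold f. simpl (mpow n N (S r)). rewrite mvec_mmul. auto. }
   rewrite E. clear E.
   assert (E2 : rsum (S K) (fun r => f r i) = f 0%nat i + rsum K (fun r => f (S r) i)) by apply rsum_shift.
   rewrite rsum_split_last in E2.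
   assert (F0 : f 0%nat i = 1). { unfold f. simpl. unfold mvec. rewrite (rsum_delta_l n onev i Hi). auto. }
   assert (FK : f K i < 1).
   { unfold f, mvec. unfold onev. eapply Rle_lt_trans. apply (rsum_le n _ (fun _ => / (INR n + 1))).
     intros j Hj. rewrite Rmult_1_r. specialize (HK i j Hi Hj). apply Rabs_def2 in HK. lra.
     rewrite rsum_const. assert (INR n * / (INR n + 1) < 1). apply (Rmult_lt_reg_r (INR n + 1)). pose proof (pos_INR n); lra.
     rewrite Rmult_assoc, Rinv_l, Rmult_1_l, Rmult_1_r; pose proof (pos_INR n); lra. lra. }
   lra. Qed.

Lemma Dk_Lc n N : nonneg_mat n N -> Dk n N -> Lc n N.
Proof. intros HN HD. apply Lc_Rc_tr. apply Dk_Rc. apply nonneg_tr; auto. apply Dk_tr; auto. Qed.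

Definition nrm (x y : R) := sqrt (x * x + y * y).
Lemma nrm_pos x y : 0 <= nrm x y.
Proof. apply sqrt_pos. Qed.
Lemma nrm_triang x1 y1 x2 y2 : nrm (x1 + x2) (y1 + y2) <= nrm x1 y1 + nrm x2 y2.
Proof. unfold nrm.
 set (a := x1*x1+y1*y1). set (b := x2*x2+y2*y2).
 assert (Ha : 0 <= a) by (unfold a; nra). assert (Hb : 0 <= b) by (unfold b; nra).
 rewrite <- (sqrt_square (sqrt a + sqrt b)) by (pose proof (sqrt_pos a); pose proof (sqrt_pos b); lra).
 apply sqrt_le_1_alt.
 replace ((sqrt a + sqrt b) * (sqrt a + sqrt b)) with (a + b + 2 * sqrt (a * b)).
 2:{ rewrite sqrt_mult by auto. replace a with (sqrt a * sqrt a) at 1 by (apply sqrt_sqrt; auto).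
     replace b with (sqrt b * sqrt b) at 1 by (apply sqrt_sqrt; auto). ring. }
 assert (x1*x2+y1*y2 <= sqrt (a*b)).
 { destruct (Rle_or_lt (x1*x2+y1*y2) 0). pose proof (sqrt_pos (a*b)); lra.
   rewrite <- (sqrt_square (x1*x2+y1*y2)) by lra. apply sqrt_le_1_alt. unfold a, b. pose proof (Rle_0_sqr (x1*y2 - x2*y1)) as HH; unfold Rsqr in HH. nra. }
 unfold a, b in *. nra. Qed.
Lemma nrm_scal c x y : 0 <= c -> nrm (c * x) (c * y) = c * nrm x y.
Proof. intros. unfold nrm. replace (c*x*(c*x)+c*y*(c*y)) with ((c*c)*(x*x+y*y)) by ring.
 rewrite sqrt_mult by nra. rewrite sqrt_square; auto. Qed.
Lemma nrm_rot al be x y : nrm (al * x - be * y) (be * x + al * y) = nrm al be * nrm x y.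
Proof. unfold nrm. rewrite <- sqrt_mult by nra. f_equal; ring. Qed.
Lemma nrm_sum n c a b : (forall j, (j<n)%nat -> 0 <= c j) ->
  nrm (rsum n (fun j => c j * a j)) (rsum n (fun j => c j * b j)) <= rsum n (fun j => c j * nrm (a j) (b j)).
Proof. induction n; intros H; simpl. unfold nrm. replace (0*0+0*0) with 0 by ring. rewrite sqrt_0; lra.
 eapply Rle_trans. apply nrm_triang. rewrite nrm_scal by (apply H; lia).
 assert (nrm (rsum n (fun j => c j * a j)) (rsum n (fun j => c j * b j)) <= rsum n (fun j => c j * nrm (a j) (b j))).
 apply IHn; intros; apply H; lia. lra. Qed.
Lemma nrm_pos_strict x y : (x <> 0 \/ y <> 0) -> 0 < nrm x y.
Proof. intros H. unfold nrm. apply sqrt_lt_R0. destruct H; nra. Qed.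

Lemma Lc_Schur n N : nonneg_mat n N -> Lc n N -> Schur_stable n N.
Proof. intros HN [l [Hl HL]] a b al be [i0 [Hi0 Hnz]] Ha Hb.
 set (w := fun j => nrm (a j) (b j)).
 set (rho := nrm al be).
 assert (Hw : forall j, (j<n)%nat -> 0 <= w j) by (intros; apply nrm_pos).
 assert (Hrow : forall i, (i<n)%nat -> rho * w i <= rsum n (fun j => N i j * w j)).
 { intros i Hi. unfold rho, w. rewrite <- nrm_rot. rewrite <- Ha, <- Hb by auto.
   unfold mvec. apply nrm_sum. intros; apply HN; auto. }
 assert (Hw0 : 0 < w i0) by (apply nrm_pos_strict; auto).
 set (S := rsum n (fun i => l i * w i)).
 assert (HS : 0 < S). { unfold S. rewrite <- (rsum_zero n). apply rsum_lt.
   intros; apply Rmult_le_pos; [apply Rlt_le, Hl|]; auto. exists i0; split; auto. apply Rmult_lt_0_compat; auto. }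
 assert (rho * S < S).
 { unfold S. rewrite <- rsum_scal. eapply Rle_lt_trans.
   apply (rsum_le n _ (fun i => l i * rsum n (fun j => N i j * w j))).
   intros i Hi. replace (rho * (l i * w i)) with (l i * (rho * w i)) by ring. apply Rmult_le_compat_l.
   apply Rlt_le, Hl; auto. auto.
   replace (rsum n (fun i => l i * rsum n (fun j => N i j * w j))) with (rsum n (fun j => vmat n l N j * w j)).
   apply rsum_lt. intros j Hj. apply Rmult_le_compat_r; auto. apply Rlt_le, HL; auto.
   exists i0. split; [auto|]. apply Rmult_lt_compat_r; [auto|apply HL; auto].
   unfold vmat. transitivity (rsum n (fun j => rsum n (fun i => l i * N i j * w j))).
   apply rsum_ext; intros; rewrite <- rsum_scal_r; auto.
   rewrite <- rsum_swap. apply rsum_ext; intros. rewrite <- rsum_scal. apply rsum_ext; intros; ring. }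
 assert (rho < 1). { apply (Rmult_lt_reg_r S); auto. lra. }
 assert (0 <= rho) by apply nrm_pos.
 assert (rho * rho < 1) by nra. unfold rho, nrm in H2. rewrite sqrt_sqrt in H2 by nra. auto. Qed.

Lemma Series_nonneg a : (forall k, 0 <= a k) -> ex_series a -> 0 <= Series a.
Proof. intros H He. replace 0 with (Series (fun k => 0 * a k)).
 apply Series_le; auto. intros k; split; [lra|]. specialize (H k); lra.
 rewrite Series_scal_l; ring. Qed.

Lemma ex_series_zero : ex_series (fun _ : nat => 0).
Proof. apply (ex_series_ext (fun k => 0 ^ k * 0)). intros k; apply Rmult_0_r.
 apply ex_series_scal_r. apply ex_series_geom. rewrite Rabs_R0; lra. Qed.

Lemma ex_series_Rscal c a : ex_series a -> ex_series (fun k => c * a k).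
Proof. intros H. apply (ex_series_ext (fun k => a k * c)). intros; apply Rmult_comm. apply ex_series_scal_r; auto. Qed.

Lemma ex_series_Rplus a b : ex_series a -> ex_series b -> ex_series (fun k => a k + b k).
Proof. intros. apply (ex_series_ext (fun k => plus (a k) (b k))). reflexivity. apply ex_series_plus; auto. Qed.

Lemma ex_series_rsum n (f : nat -> nat -> R) : (forall l, (l<n)%nat -> ex_series (f l)) ->
  ex_series (fun k => rsum n (fun l => f l k)).
Proof. induction n; intros H; simpl. apply ex_series_zero.
 apply ex_series_Rplus. apply IHn; intros; apply H; lia. apply H; lia. Qed.

Lemma Series_rsum n (f : nat -> nat -> R) : (forall l, (l<n)%nat -> ex_series (f l)) ->
  Series (fun k => rsum n (fun l => f l k)) = rsum n (fun l => Series (f l)).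
Proof. induction n; intros H; simpl.
 transitivity (Series (fun k => 0 * (fun _ : nat => 0) k)). apply Series_ext; intros; simpl; ring.
 rewrite (Series_scal_l 0 (fun _ => 0)). ring.
 rewrite Series_plus. rewrite IHn. auto. intros; apply H; lia.
 apply ex_series_rsum; intros; apply H; lia. apply H; lia. Qed.

Lemma sub_geo n N x s : nonneg_mat n N -> pos_vec n x -> 0 <= s ->
  (forall i, (i<n)%nat -> mvec n N x i <= s * x i) ->
  exists c, 0 <= c /\ forall k i j, (i<n)%nat -> (j<n)%nat -> mpow n N k i j <= c * s ^ k.
Proof. intros HN Hx Hs Hstep.
 destruct (fin_min n x) as [m [Hm Hm2]]. intros; apply Hx; auto.
 set (X := rsum n x).
 assert (HX0 : 0 <= X). unfold X; apply rsum_nonneg; intros; apply Rlt_le, Hx; auto.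
 assert (Hk : forall k i, (i<n)%nat -> mvec n (mpow n N k) x i <= s ^ k * x i).
 { induction k; intros i Hi. simpl. unfold mvec. rewrite (rsum_delta_l n x i Hi). lra.
   simpl (mpow n N (S k)). rewrite mvec_mmul.
   eapply Rle_trans. apply (mvec_mono n N _ (fun j => s ^ k * x j)); auto.
   rewrite mvec_scal. simpl. specialize (Hstep i Hi). assert (0 <= s ^ k) by (apply pow_le; lra).
   apply Rle_trans with (s ^ k * (s * x i)); [apply Rmult_le_compat_l; auto| right; ring]. }
 exists (X / m). split. apply Rmult_le_pos; auto. apply Rlt_le, Rinv_0_lt_compat; auto.
 intros k i j Hi Hj.
 assert (H1 : mpow n N k i j * x j <= s ^ k * x i).
 { eapply Rle_trans; [|apply Hk; auto]. unfold mvec.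
   apply (rsum_term_le n (fun j => mpow n N k i j * x j) j); auto. intros; apply Rmult_le_pos.
   apply mpow_nonneg; auto. apply Rlt_le, Hx; auto. }
 assert (Hxj : m <= x j) by auto. assert (Hxi : x i <= X) by (apply pos_sum_ge; auto).
 assert (0 <= s ^ k) by (apply pow_le; lra).
 assert (0 <= mpow n N k i j) by (apply mpow_nonneg; auto).
 assert (mpow n N k i j * m <= s ^ k * X).
 { eapply Rle_trans. apply Rmult_le_compat_l; eauto. eapply Rle_trans; eauto. apply Rmult_le_compat_l; auto. }
 apply (Rmult_le_reg_r m); auto. replace (X / m * s ^ k * m) with (s ^ k * X) by (field; lra). lra. Qed.

Lemma resolvent n N x s t : nonneg_mat n N -> pos_vec n x -> 0 <= s -> s < t ->
  (forall i, (i<n)%nat -> mvec n N x i <= s * x i) ->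
  exists S : mat, (forall i j, (i<n)%nat -> (j<n)%nat -> 0 <= S i j) /\
    (forall i, (i<n)%nat -> / t <= S i i) /\
    (forall i j, (i<n)%nat -> (j<n)%nat -> rsum n (fun l => S i l * (t * idm l j - N l j)) = idm i j).
Proof. intros HN Hx Hs Hst Hsub.
 destruct (sub_geo n N x s HN Hx Hs Hsub) as [c [Hc Hg]].
 assert (Ht : 0 < t) by lra.
 set (a := fun i j k => mpow n N k i j / t ^ (S k)).
 assert (Hex : forall i j, (i<n)%nat -> (j<n)%nat -> ex_series (a i j)).
 { intros i j Hi Hj. apply (@ex_series_le _ R_CompleteNormedModule (a i j) (fun k => (c / t) * (s / t) ^ k)).
   intros k. unfold norm; simpl. unfold abs; simpl. unfold a.
   rewrite Rabs_pos_eq. 2:{ apply Rmult_le_pos. apply mpow_nonneg; auto. apply Rlt_le, Rinv_0_lt_compat, pow_lt; auto. }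
   unfold Rdiv. rewrite Rpow_mult_distr. rewrite pow_inv. simpl (t ^ S k). rewrite Rinv_mult.
   apply Rle_trans with (c * s ^ k * (/ t * / t ^ k)).
   apply Rmult_le_compat_r. apply Rmult_le_pos; apply Rlt_le, Rinv_0_lt_compat; auto. apply pow_lt; auto. auto.
   right; ring.
   apply ex_series_Rscal. apply ex_series_geom. rewrite Rabs_pos_eq.
   apply (Rmult_lt_reg_r t); auto. unfold Rdiv. rewrite Rmult_assoc, Rinv_l; lra.
   apply Rmult_le_pos; auto. apply Rlt_le, Rinv_0_lt_compat; auto. }
 exists (fun i j => Series (a i j)). split; [|split].
 - intros i j Hi Hj. apply Series_nonneg; auto. intros k. unfold a. apply Rmult_le_pos. apply mpow_nonneg; auto.
   apply Rlt_le, Rinv_0_lt_compat, pow_lt; auto.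
 - intros i Hi. rewrite Series_incr_1 by auto. unfold a at 1. simpl mpow. unfold idm. destruct (Nat.eq_dec i i); [|lia].
   simpl pow. rewrite Rmult_1_r. unfold Rdiv. rewrite Rmult_1_l.
   assert (0 <= Series (fun k => a i i (S k))). apply Series_nonneg. intros k. unfold a. apply Rmult_le_pos. apply mpow_nonneg; auto.
   apply Rlt_le, Rinv_0_lt_compat, pow_lt; auto. apply (ex_series_incr_1 (a i i)); auto. lra.
 - intros i j Hi Hj.
   transitivity (t * Series (a i j) - rsum n (fun l => Series (a i l) * N l j)).
   { rewrite (rsum_ext n _ (fun l => t * (Series (a i l) * idm l j) - Series (a i l) * N l j)) by (intros; ring).
     rewrite rsum_minus, rsum_scal, (rsum_delta_r n (fun l => Series (a i l)) j Hj). auto. }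
   assert (E : rsum n (fun l => Series (a i l) * N l j) = Series (fun k => a i j (S k)) * t).
   { transitivity (rsum n (fun l => Series (fun k => a i l k * N l j))).
     apply rsum_ext; intros. rewrite Series_scal_r; auto.
     rewrite <- Series_rsum. 2:{ intros; apply ex_series_scal_r; auto. }
     rewrite <- Series_scal_r. apply Series_ext. intros k. unfold a.
     rewrite (mpow_S_r n N k i j Hi Hj). unfold mmul. unfold Rdiv. rewrite Rmult_assoc, <- rsum_scal_r.
     assert (t ^ k <> 0) by (apply pow_nonzero; lra).
     apply rsum_ext; intros l Hl. simpl pow. field. split; lra. }
   rewrite E. rewrite (Series_incr_1 (a i j)) by auto. unfold a at 1. simpl mpow. simpl pow.
   field. lra. Qed.

Definition Gs n N s := exists x, pos_vec n x /\ forall i, (i<n)%nat -> mvec n N x i <= s * x i.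

Lemma Schur_Rc n N : nonneg_mat n N -> Schur_stable n N -> Rc n N.
Proof. intros HN HS.
 destruct n as [|n']. exists onev; split; intros i Hi; lia.
 set (n := S n') in *.
 assert (Hn0 : (0 < n)%nat) by (unfold n; lia).
 assert (G0 : Gs n N (msz n N + 1)).
 { exists onev. split. intros i _; unfold onev; lra. intros i Hi. unfold mvec, onev.
   rewrite Rmult_1_r. eapply Rle_trans. apply (rsum_le n _ (fun j => Rabs (N i j))). intros; rewrite Rmult_1_r; apply Rle_abs.
   eapply Rle_trans. apply msz_row; auto. lra. }
 assert (Gpos : forall s, Gs n N s -> 0 <= s).
 { intros s [x [Hx H]]. specialize (H 0%nat Hn0). assert (0 <= mvec n N x 0%nat).
   unfold mvec; apply rsum_nonneg; intros; apply Rmult_le_pos; [apply HN|apply Rlt_le, Hx]; auto.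
   specialize (Hx 0%nat Hn0). nra. }
 set (E := fun y => exists s, Gs n N s /\ y = - s).
 destruct (completeness E) as [mm [Hub Hlub]].
 { exists 0. intros y [s [Hs ->]]. specialize (Gpos s Hs). lra. }
 { exists (- (msz n N + 1)). exists (msz n N + 1). auto. }
 set (r := - mm).
 assert (inf1 : forall s, Gs n N s -> r <= s).
 { intros s Hs. assert (- s <= mm) by (apply Hub; exists s; auto). unfold r; lra. }
 assert (inf2 : forall t, r < t -> exists s, Gs n N s /\ s < t).
 { intros t Ht. apply Classical_Prop.NNPP; intros Hno.
   assert (mm <= - t). apply Hlub. intros y [s [Hs ->]].
   destruct (Rlt_or_le s t). exfalso; apply Hno; exists s; auto. lra.
   unfold r in Ht; lra. }
 assert (Hr0 : 0 <= r). { assert (mm <= 0). apply Hlub. intros y [s [Hs ->]]. specialize (Gpos s Hs); lra. unfold r; lra. }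
 destruct (Rlt_or_le r 1) as [Hr1|Hr1].
 { destruct (inf2 1 Hr1) as [s [[x [Hx Hsx]] Hs1]]. exists x. split; auto. intros i Hi.
   specialize (Gpos s (ex_intro _ x (conj Hx Hsx))). specialize (Hsx i Hi). specialize (Hx i Hi). nra. }
 exfalso.
 destruct (bridge n (fun i j => r * idm i j - N i j)) as [[y [[i0 [Hi0 Hy0]] Hy]] | [B HB]].
 - assert (r * r + 0 * 0 < 1).
   { apply (HS y (fun _ => 0) r 0).
     exists i0. split; auto.
     intros i Hi. specialize (Hy i Hi).
     rewrite (rsum_ext n _ (fun j => r * (idm i j * y j) - N i j * y j)) in Hy by (intros; ring).
     rewrite rsum_minus, rsum_scal, (rsum_delta_l n y i Hi) in Hy. unfold mvec. lra.
     intros i Hi. unfold mvec. rewrite rsum_zero'. ring. intros; ring. }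
   nra.
 - set (bB := msz n B).
   assert (HbB : 0 <= bB) by apply msz_nonneg.
   set (eta := / (2 * (bB + 1) * (bB + 1) * (r + 1))).
   assert (Heta : 0 < eta) by (unfold eta; apply Rinv_0_lt_compat; nra).
   assert (Heta1 : eta * ((bB + 1) * (bB + 1)) * 2 * (r + 1) = 1) by (unfold eta; field; nra).
   set (t := r + eta).
   destruct (inf2 t ltac:(unfold t; lra)) as [s [[x [Hx Hsx]] Hst]].
   assert (Hs0 := Gpos s (ex_intro _ x (conj Hx Hsx))).
   destruct (resolvent n N x s t HN Hx Hs0 Hst Hsx) as [S [HS0 [HSd HSi]]].
   assert (HSB : forall i j, (i<n)%nat -> (j<n)%nat -> S i j = B i j - eta * mmul n S B i j).
   { intros i j Hi Hj.
     assert (H1 : forall k, (k<n)%nat -> mmul n S (fun l j => r * idm l j - N l j) i k = idm i k - eta * S i k).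
     { intros k Hk. unfold mmul. rewrite <- (HSi i k Hi Hk).
       rewrite (rsum_ext n _ (fun l => S i l * (t * idm l k - N l k) - eta * (S i l * idm l k))).
       rewrite rsum_minus, rsum_scal, (rsum_delta_r n (S i) k Hk). auto.
       intros; unfold t; ring. }
     assert (H2 := mmul_assoc n S (fun l j => r * idm l j - N l j) B i j).
     rewrite (mmul_ext n (mmul n S (fun l j => r * idm l j - N l j)) (fun i k => idm i k - eta * S i k) B B) in H2 by auto.
     rewrite (mmul_ext n S S (mmul n (fun l j => r * idm l j - N l j) B) idm) in H2 by (auto; intros; apply HB; auto).
     rewrite mmul_idm_r in H2 by auto.
     unfold mmul at 1 in H2. rewrite (rsum_ext n _ (fun k => idm i k * B k j - eta * (S i k * B k j))) in H2 by (intros; ring).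
     rewrite rsum_minus, (rsum_delta_l n (fun k => B k j) i Hi), rsum_scal in H2. unfold mmul. lra. }
   set (m := rsum n (fun i => rsum n (fun j => S i j))).
   assert (Hm0 : 0 <= m) by (apply rsum_nonneg; intros; apply rsum_nonneg; intros; auto).
   assert (HSBabs : rsum n (fun i => rsum n (fun j => Rabs (mmul n S B i j))) <= bB * m).
   { unfold m. rewrite <- rsum_scal. apply rsum_le. intros i Hi.
     apply Rle_trans with (rsum n (fun j => rsum n (fun l => S i l * Rabs (B l j)))).
     apply rsum_le; intros j Hj. unfold mmul. eapply Rle_trans. apply rsum_abs. apply rsum_le; intros l Hl.
     rewrite Rabs_mult, (Rabs_pos_eq (S i l)); auto. apply Rle_refl.
     rewrite rsum_swap. rewrite <- rsum_scal. apply rsum_le; intros l Hl. rewrite rsum_scal.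
     rewrite Rmult_comm. apply Rmult_le_compat_r; auto. apply msz_row; auto. }
   assert (Hsum_le : forall f, rsum n (fun i => rsum n (fun j => f i j)) <= rsum n (fun i => rsum n (fun j => Rabs (f i j)))).
   { intros f. apply rsum_le; intros; apply rsum_le; intros; apply Rle_abs. }
   assert (HmB : m <= bB + eta * (bB * m)).
   { unfold m at 1. rewrite (rsum_ext n _ (fun i => rsum n (fun j => B i j - eta * mmul n S B i j))).
     2:{ intros i Hi; apply rsum_ext; intros; apply HSB; auto. }
     rewrite (rsum_ext n _ (fun i => rsum n (fun j => B i j) - eta * rsum n (fun j => mmul n S B i j))).
     2:{ intros; rewrite rsum_minus, rsum_scal; auto. }
     rewrite rsum_minus, rsum_scal.
     assert (rsum n (fun i => rsum n (fun j => B i j)) <= bB).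
     { eapply Rle_trans. apply Hsum_le. apply Rle_refl. }
     assert (- rsum n (fun i => rsum n (fun j => mmul n S B i j)) <= bB * m).
     { eapply Rle_trans; [|apply HSBabs]. rewrite <- (Rmult_1_l (rsum _ _)). rewrite Ropp_mult_distr_l.
       rewrite <- rsum_scal. apply rsum_le; intros i Hi. rewrite <- rsum_scal. apply rsum_le; intros j Hj.
       pose proof (Rabs_maj2 (mmul n S B i j)). lra. }
     nra. }
   assert (Hq : eta * bB <= / 2).
   { assert (eta * bB <= eta * ((bB+1)*(bB+1))) by (apply Rmult_le_compat_l; nra).
     assert (eta * ((bB+1)*(bB+1)) = / (2 * (r+1))) by (unfold eta; field; nra).
     assert (/ (2 * (r+1)) <= / 2). apply Rinv_le_contravar; lra. lra. }
   assert (Hm2 : m <= 2 * bB) by nra.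
   set (xx := fun i => rsum n (fun j => B i j)).
   assert (Hxx : forall i, (i<n)%nat -> 0 < xx i).
   { intros i Hi. unfold xx.
     rewrite (rsum_ext n _ (fun j => S i j + eta * mmul n S B i j)) by (intros; rewrite HSB; auto; ring).
     rewrite rsum_plus, rsum_scal.
     assert (S i i <= rsum n (S i)) by (apply rsum_term_le; auto).
     assert (- rsum n (fun j => mmul n S B i j) <= bB * m).
     { eapply Rle_trans; [|apply HSBabs]. eapply Rle_trans; [apply Rabs_maj2|]. eapply Rle_trans. apply rsum_abs.
       apply (rsum_term_le n (fun i => rsum n (fun j => Rabs (mmul n S B i j)))); auto.
       intros; apply rsum_nonneg; intros; apply Rabs_pos. }
     specialize (HSd i Hi).
     assert (eta * (bB * m) <= eta * (bB * (2 * bB))) by (apply Rmult_le_compat_l; [lra|]; apply Rmult_le_compat_l; auto).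
     assert (eta * (bB * (2 * bB)) < / t).
     { assert (eta * (bB * (2*bB)) < eta * (2 * ((bB+1)*(bB+1)))) by (apply Rmult_lt_compat_l; nra).
       assert (eta * (2 * ((bB+1)*(bB+1))) = / (r + 1)) by (unfold eta; field; nra).
       assert (eta <= 1). { assert (eta * ((bB+1)*(bB+1)) = / (2 * (r+1))) by (unfold eta; field; nra).
          assert (/ (2*(r+1)) <= / 2) by (apply Rinv_le_contravar; lra).
          assert (eta <= eta * ((bB+1)*(bB+1))). rewrite <- (Rmult_1_r eta) at 1. apply Rmult_le_compat_l; nra. lra. }
       assert (/ (r+1) <= / t) by (apply Rinv_le_contravar; unfold t; lra). lra. }
     change (rsum n (fun j => mmul n S B i j)) with (rsum n (mmul n S B i)) in H0.
     assert (eta * (- rsum n (mmul n S B i)) <= eta * (bB * m)) by (apply Rmult_le_compat_l; lra).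
     lra. }
   set (X := rsum n xx).
   assert (HX : 0 < X). { apply Rlt_le_trans with (xx 0%nat). auto. apply pos_sum_ge; auto. }
   assert (G1 : Gs n N (r - / X)).
   { exists xx. split; auto. intros i Hi.
     assert (E1 : mvec n N xx i = r * xx i - 1).
     { unfold mvec, xx. rewrite (rsum_ext n _ (fun j => rsum n (fun l => N i j * B j l))) by (intros; rewrite rsum_scal; auto).
       rewrite rsum_swap.
       rewrite (rsum_ext n _ (fun l => r * B i l - idm i l)).
       rewrite rsum_minus, rsum_scal. rewrite (rsum_ext n (idm i) (fun l => idm i l * 1)) by (intros; ring).
       rewrite (rsum_delta_l n (fun _ => 1) i Hi). auto.
       intros l Hl. specialize (HB i l Hi Hl).
       rewrite (rsum_ext n _ (fun k => r * (idm i k * B k l) - N i k * B k l)) in HB by (intros; ring).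
       rewrite rsum_minus, rsum_scal, (rsum_delta_l n (fun k => B k l) i Hi) in HB. lra. }
     rewrite E1. assert (xx i <= X) by (apply pos_sum_ge; auto). specialize (Hxx i Hi).
     assert (xx i / X <= 1). { apply (Rmult_le_reg_r X); auto. unfold Rdiv; rewrite Rmult_assoc, Rinv_l; lra. }
     replace ((r - / X) * xx i) with (r * xx i - xx i / X) by (field; lra). lra. }
   specialize (inf1 _ G1). assert (0 < / X) by (apply Rinv_0_lt_compat; auto). lra.
Qed.

Lemma cv0_bounded u : Un_cv u 0 -> exists M, forall k, Rabs (u k) <= M.
Proof. intros H. destruct (H 1 ltac:(lra)) as [N0 HN].
 exists (1 + rsum N0 (fun k => Rabs (u k))). intros k.
 assert (0 <= rsum N0 (fun k => Rabs (u k))) by (apply rsum_nonneg; intros; apply Rabs_pos).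
 destruct (Compare_dec.le_lt_dec N0 k) as [Hk|Hk].
 - specialize (HN k Hk). unfold R_dist in HN. rewrite Rminus_0_r in HN. lra.
 - pose proof (rsum_term_le N0 (fun k => Rabs (u k)) k ltac:(intros; apply Rabs_pos) Hk). simpl in H1. lra. Qed.

Definition Ecoef n A i j (k : nat) := mpow n A k i j / INR (fact k).
Definition Em n A (s : R) : mat := fun i j => PSeries (Ecoef n A i j) s.

Lemma Ecoef_radius n A i j : (i<n)%nat -> (j<n)%nat -> CV_radius (Ecoef n A i j) = p_infty.
Proof. intros Hi Hj.
 assert (Hb : forall r, exists M, forall k, Rabs (Ecoef n A i j k * r ^ k) <= M).
 { intros r. destruct (cv0_bounded _ (cv_speed_pow_fact (msz n A * Rabs r))) as [M HM].
   exists M. intros k. eapply Rle_trans; [|apply (HM k)]. unfold Ecoef.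
   rewrite Rabs_mult. unfold Rdiv. rewrite Rabs_mult. rewrite (Rabs_pos_eq (/ INR (fact k))).
   2:{ apply Rlt_le, Rinv_0_lt_compat, lt_0_INR, lt_O_fact. }
   rewrite (Rabs_pos_eq (_ * / _)).
   2:{ apply Rmult_le_pos. apply pow_le. apply Rmult_le_pos. apply msz_nonneg. apply Rabs_pos.
       apply Rlt_le, Rinv_0_lt_compat, lt_0_INR, lt_O_fact. }
   rewrite Rpow_mult_distr, RPow_abs.
   assert (0 < / INR (fact k)) by (apply Rinv_0_lt_compat, lt_0_INR, lt_O_fact).
   assert (Rabs (mpow n A k i j) <= msz n A ^ k) by (apply mpow_bound; auto).
   assert (0 <= Rabs (r ^ k)) by apply Rabs_pos.
   assert (0 <= Rabs (mpow n A k i j)) by apply Rabs_pos.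
   apply Rle_trans with (msz n A ^ k * / INR (fact k) * Rabs (r ^ k)).
   apply Rmult_le_compat_r; auto. apply Rmult_le_compat_r; lra. right; ring. }
 destruct (CV_radius_bounded (Ecoef n A i j)) as [Hub _].
 destruct (CV_radius (Ecoef n A i j)) as [l| |] eqn:E; auto.
 - exfalso. assert (Rbar_le (l + 1) l). apply Hub. apply Hb. simpl in H. lra.
 - exfalso. assert (Rbar_le 0 m_infty). apply Hub. apply Hb. simpl in H. auto. Qed.

Lemma Em_ex n A i j s : (i<n)%nat -> (j<n)%nat -> ex_series (fun k => Ecoef n A i j k * s ^ k).
Proof. intros. apply ex_pseries_R. apply CV_radius_inside. rewrite Ecoef_radius; simpl; auto. Qed.

Lemma Em_0 n A i j : (i<n)%nat -> (j<n)%nat -> Em n A 0 i j = idm i j.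
Proof. intros. unfold Em. rewrite PSeries_0. unfold Ecoef. simpl. unfold Rdiv. rewrite Rinv_1. ring. Qed.

Lemma Em_derive n A i j s : (i<n)%nat -> (j<n)%nat ->
  is_derive (fun s => Em n A s i j) s (rsum n (fun l => A i l * Em n A s l j)).
Proof. intros Hi Hj. unfold Em.
 replace (rsum n (fun l => A i l * PSeries (Ecoef n A l j) s)) with (PSeries (PS_derive (Ecoef n A i j)) s).
 apply is_derive_PSeries. rewrite Ecoef_radius; simpl; auto.
 unfold PSeries.
 rewrite (rsum_ext n _ (fun l => Series (fun k => A i l * (Ecoef n A l j k * s ^ k)))).
 2:{ intros; rewrite Series_scal_l; auto. }
 rewrite <- (Series_rsum n (fun l k => A i l * (Ecoef n A l j k * s ^ k))).
 2:{ intros l Hl. apply ex_series_Rscal. apply Em_ex; auto. }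
 apply Series_ext. intros k. unfold PS_derive, Ecoef. simpl (mpow n A (S k) i j). unfold mmul.
 rewrite fact_simpl, mult_INR.
 assert (0 < INR (fact k)) by apply lt_0_INR, lt_O_fact.
 assert (0 < INR (S k)) by (apply lt_0_INR; lia).
 rewrite (rsum_ext n (fun l => A i l * (mpow n A k l j / INR (fact k) * s ^ k)) (fun l => (A i l * mpow n A k l j) * (s ^ k / INR (fact k)))) by (intros; field; lra).
 rewrite rsum_scal_r. field. lra. Qed.

Lemma mpow_comm n A k i j : (i<n)%nat -> (j<n)%nat ->
  rsum n (fun l => A i l * mpow n A k l j) = rsum n (fun l => mpow n A k i l * A l j).
Proof. intros. change (mpow n A (S k) i j = mmul n (mpow n A k) A i j). apply mpow_S_r; auto. Qed.

Lemma Em_comm n A s i j : (i<n)%nat -> (j<n)%nat ->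
  rsum n (fun l => A i l * Em n A s l j) = rsum n (fun l => Em n A s i l * A l j).
Proof. intros Hi Hj. unfold Em, PSeries.
 rewrite (rsum_ext n _ (fun l => Series (fun k => A i l * (Ecoef n A l j k * s ^ k)))) by (intros; rewrite Series_scal_l; auto).
 rewrite (rsum_ext n (fun l => Series _ * A l j) (fun l => Series (fun k => Ecoef n A i l k * s ^ k * A l j))) by (intros; rewrite Series_scal_r; auto).
 rewrite <- !Series_rsum. apply Series_ext. intros k. unfold Ecoef.
 transitivity (rsum n (fun l => A i l * mpow n A k l j) * (s ^ k / INR (fact k))).
 rewrite <- rsum_scal_r. apply rsum_ext; intros; unfold Rdiv; ring.
 rewrite mpow_comm; auto. rewrite <- rsum_scal_r. apply rsum_ext; intros; unfold Rdiv; ring.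
 intros; apply ex_series_scal_r; apply Em_ex; auto.
 intros; apply ex_series_Rscal; apply Em_ex; auto. Qed.

Lemma Em_derive_r n A i j s : (i<n)%nat -> (j<n)%nat ->
  is_derive (fun s => Em n A s i j) s (rsum n (fun l => Em n A s i l * A l j)).
Proof. intros. rewrite <- Em_comm; auto. apply Em_derive; auto. Qed.

Lemma Em_cont n A i j s : (i<n)%nat -> (j<n)%nat -> continuity_pt (fun s => Em n A s i j) s.
Proof. intros. apply PSeries_continuity. rewrite Ecoef_radius; simpl; auto. Qed.

Lemma mpow_scale n A s k i j : mpow n (mscale s A) k i j = s ^ k * mpow n A k i j.
Proof. revert i j; induction k; intros i j. simpl; ring.
 simpl. unfold mmul. rewrite <- rsum_scal. apply rsum_ext; intros. rewrite IHk. unfold mscale. ring. Qed.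

Lemma mexp_Em n A s i j : (i<n)%nat -> (j<n)%nat -> mexp n (mscale s A) i j = Em n A s i j.
Proof. intros Hi Hj. unfold mexp.
 assert (Hs : infinite_sum (fun k => mpow n (mscale s A) k i j / INR (fact k)) (Em n A s i j)).
 { apply is_series_Reals. unfold Em, PSeries.
   assert (Hf : (fun k => mpow n (mscale s A) k i j / INR (fact k)) = (fun k => Ecoef n A i j k * s ^ k)).
   { apply FunctionalExtensionality.functional_extensionality. intros k; unfold Ecoef; rewrite mpow_scale; unfold Rdiv; ring. }
   rewrite Hf.
   apply Series_correct. apply Em_ex; auto. }
 assert (Hs' := epsilon_spec (inhabits 0) (fun l => infinite_sum (fun k => mpow n (mscale s A) k i j / INR (fact k)) l) (ex_intro _ _ Hs)). simpl in Hs'.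
 apply is_series_Reals in Hs. apply is_series_Reals in Hs'.
 apply is_series_unique in Hs. apply is_series_unique in Hs'. congruence. Qed.

Notation dpl := derivable_pt_lim.

Lemma dpl_plus f g x lf lg : dpl f x lf -> dpl g x lg -> dpl (fun r => f r + g r) x (lf + lg).
Proof. intros; apply (derivable_pt_lim_plus f g); auto. Qed.
Lemma dpl_minus f g x lf lg : dpl f x lf -> dpl g x lg -> dpl (fun r => f r - g r) x (lf - lg).
Proof. intros; apply (derivable_pt_lim_minus f g); auto. Qed.
Lemma dpl_mult f g x lf lg : dpl f x lf -> dpl g x lg -> dpl (fun r => f r * g r) x (lf * g x + f x * lg).
Proof. intros; apply (derivable_pt_lim_mult f g); auto. Qed.
Lemma dpl_scal c f x l : dpl f x l -> dpl (fun r => c * f r) x (c * l).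
Proof. intros; apply (derivable_pt_lim_scal f c); auto. Qed.
Lemma dpl_const c x : dpl (fun _ => c) x 0.
Proof. apply derivable_pt_lim_const. Qed.
Lemma dpl_id x : dpl (fun r => r) x 1.
Proof. apply derivable_pt_lim_id. Qed.
Lemma dpl_expc c x : dpl (fun r => exp (c * r)) x (c * exp (c * x)).
Proof. replace (c * exp (c * x)) with (exp (c * x) * c) by ring.
 apply (derivable_pt_lim_comp (fun r => c * r) exp).
 assert (H : dpl (fun r => c * r) x (c * 1)) by (apply dpl_scal, dpl_id). rewrite Rmult_1_r in H. exact H.
 apply derivable_pt_lim_exp. Qed.
Lemma dpl_rsum n (f : nat -> R -> R) (f' : nat -> R) x :
  (forall i, (i<n)%nat -> dpl (f i) x (f' i)) -> dpl (fun r => rsum n (fun i => f i r)) x (rsum n f').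
Proof. induction n; intros H; simpl. apply dpl_const.
 apply dpl_plus. apply IHn; intros; apply H; lia. apply H; lia. Qed.
Lemma dpl_cont f x l : dpl f x l -> continuity_pt f x.
Proof. intros H. apply derivable_continuous_pt. exists l; exact H. Qed.
Lemma dpl_unique f x l1 l2 : dpl f x l1 -> dpl f x l2 -> l1 = l2.
Proof. intros; eapply uniqueness_limite; eauto. Qed.

Lemma dpl_ext_loc f g x l a b : a < x < b -> (forall r, a < r < b -> f r = g r) -> dpl f x l -> dpl g x l.
Proof. intros Hx He H. apply is_derive_Reals. apply is_derive_Reals in H.
 apply (is_derive_ext_loc f g); auto.
 assert (Hd : 0 < Rmin (x - a) (b - x)) by (apply Rmin_pos; lra).
 exists (mkposreal _ Hd). intros r Hr. apply He.
 unfold ball in Hr; simpl in Hr; unfold AbsRing_ball, abs, minus, plus, opp in Hr; simpl in Hr.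
 apply Rabs_def2 in Hr. pose proof (Rmin_l (x-a) (b-x)). pose proof (Rmin_r (x-a) (b-x)). lra. Qed.

Lemma mono_dec f f' a b s1 s2 : a < s1 -> s1 <= s2 -> s2 < b ->
  (forall s, a < s < b -> dpl f s (f' s)) -> (forall s, a < s < b -> f' s <= 0) -> f s2 <= f s1.
Proof. intros H1 H2 H3 Hd Hn. destruct (Req_dec s1 s2) as [<-|ne]. lra.
 destruct (MVT_gen f s1 s2 f') as [c [Hc E]].
 - intros x Hx. rewrite Rmin_left, Rmax_right in Hx by lra. apply is_derive_Reals, Hd. lra.
 - intros x Hx. rewrite Rmin_left, Rmax_right in Hx by lra. eapply dpl_cont, Hd. lra.
 - rewrite Rmin_left, Rmax_right in Hc by lra. assert (f' c <= 0) by (apply Hn; lra).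
   assert (f' c * (s2 - s1) <= 0) by (apply Rmult_le_0_r; lra). lra. Qed.

Lemma fin_delta n (P : nat -> R -> Prop) :
  (forall i, (i<n)%nat -> exists d, 0 < d /\ forall d', 0 < d' <= d -> P i d') ->
  exists d, 0 < d /\ forall i, (i<n)%nat -> forall d', 0 < d' <= d -> P i d'.
Proof. induction n; intros H. exists 1; split; [lra|intros; lia].
 destruct IHn as [d1 [Hd1 H1]]. intros; apply H; lia.
 destruct (H n) as [d2 [Hd2 H2]]. lia.
 exists (Rmin d1 d2). split. apply Rmin_pos; auto.
 intros i Hi d' Hd'. pose proof (Rmin_l d1 d2). pose proof (Rmin_r d1 d2).
 destruct (Nat.eq_dec i n) as [->|ne]. apply H2. lra. apply H1. lia. lra. Qed.

Lemma quad_bound n A (v : vec) :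
  rsum n (fun i => v i * mvec n A v i) <= msz n A * rsum n (fun i => v i * v i).
Proof.
 unfold mvec.
 apply Rle_trans with (rsum n (fun i => rsum n (fun j => Rabs (A i j) * ((v i * v i + v j * v j) / 2)))).
 { apply rsum_le; intros i Hi. rewrite <- rsum_scal. apply rsum_le; intros j Hj.
   assert (v i * (A i j * v j) <= Rabs (A i j) * Rabs (v i * v j)).
   { replace (v i * (A i j * v j)) with (A i j * (v i * v j)) by ring. rewrite <- Rabs_mult. apply Rle_abs. }
   assert (Rabs (v i * v j) <= (v i * v i + v j * v j) / 2).
   { rewrite Rabs_mult. pose proof (Rabs_pos (v i)). pose proof (Rabs_pos (v j)).
     assert (E1 : Rabs (v i) * Rabs (v i) = v i * v i) by (rewrite <- Rabs_mult; apply Rabs_pos_eq; nra).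
     assert (E2 : Rabs (v j) * Rabs (v j) = v j * v j) by (rewrite <- Rabs_mult; apply Rabs_pos_eq; nra).
     rewrite <- E1, <- E2. pose proof (Rle_0_sqr (Rabs (v i) - Rabs (v j))) as HH. unfold Rsqr in HH. nra. }
   pose proof (Rabs_pos (A i j)). nra. }
 rewrite (rsum_ext n _ (fun i => rsum n (fun j => Rabs (A i j) * (v i * v i)) / 2 + rsum n (fun j => Rabs (A i j) * (v j * v j)) / 2)).
 2:{ intros. rewrite (rsum_ext n _ (fun j => Rabs (A i j) * (v i * v i) * / 2 + Rabs (A i j) * (v j * v j) * / 2)) by (intros; field).
     rewrite rsum_plus, !rsum_scal_r. reflexivity. }
 rewrite rsum_plus. unfold Rdiv. rewrite !rsum_scal_r. rewrite (rsum_swap n n (fun i j => Rabs (A i j) * (v j * v j))).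
 set (phi := rsum n (fun i => v i * v i)).
 assert (H1 : rsum n (fun i => rsum n (fun j => Rabs (A i j) * (v i * v i))) <= msz n A * phi).
 { unfold phi. rewrite <- rsum_scal. apply rsum_le. intros i Hi. rewrite rsum_scal_r.
   apply Rmult_le_compat_r. nra. apply msz_row; auto. }
 assert (H2 : rsum n (fun j => rsum n (fun i => Rabs (A i j) * (v j * v j))) <= msz n A * phi).
 { unfold phi. rewrite <- rsum_scal. apply rsum_le. intros j Hj. rewrite rsum_scal_r.
   apply Rmult_le_compat_r. nra. apply msz_col; auto. }
 lra. Qed.

Lemma ode_unique n A a b (y : R -> vec) :
  (forall s, a < s < b -> forall i, (i<n)%nat -> dpl (fun r => y r i) s (mvec n A (y s) i)) ->
  (forall i, (i<n)%nat -> forall eps, 0 < eps -> exists del, 0 < del /\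
      forall s, a < s < b -> s - a < del -> Rabs (y s i) < eps) ->
  forall s, a < s < b -> forall i, (i<n)%nat -> y s i = 0.
Proof.
 intros Hd Hl s Hs i0 Hi0.
 set (K := 2 * msz n A).
 assert (HK : 0 <= K) by (unfold K; pose proof (msz_nonneg n A); lra).
 set (phi := fun r => rsum n (fun i => y r i * y r i)).
 assert (Hphi0 : forall r, 0 <= phi r) by (intros; unfold phi; apply rsum_nonneg; intros; nra).
 set (dphi := fun r => rsum n (fun i => 2 * (y r i * mvec n A (y r) i))).
 assert (Hphi : forall r, a < r < b -> dpl phi r (dphi r)).
 { intros r Hr. unfold phi, dphi. apply (dpl_rsum n (fun i r => y r i * y r i)). intros i Hi.
   replace (2 * (y r i * mvec n A (y r) i)) with (mvec n A (y r) i * y r i + y r i * mvec n A (y r) i) by ring.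
   apply dpl_mult; apply Hd; auto. }
 assert (Hbd : forall r, dphi r <= K * phi r).
 { intros r. unfold dphi, K, phi. rewrite rsum_scal. pose proof (quad_bound n A (y r)). lra. }
 set (psi := fun r => exp (- K * r) * phi r).
 assert (Hpsi : forall r, a < r < b -> dpl psi r (exp (- K * r) * (dphi r - K * phi r))).
 { intros r Hr. unfold psi. replace (exp (- K * r) * (dphi r - K * phi r)) with
     ((- K * exp (- K * r)) * phi r + exp (- K * r) * dphi r) by ring.
   apply (dpl_mult (fun r => exp (- K * r)) phi). apply dpl_expc. apply Hphi; auto. }
 assert (Hmono : forall s1, a < s1 <= s -> psi s <= psi s1).
 { intros s1 Hs1. apply (mono_dec psi (fun r => exp (- K * r) * (dphi r - K * phi r)) a b s1 s); try lra.
   auto. intros r Hr. assert (0 < exp (- K * r)) by apply exp_pos. specialize (Hbd r). nra. }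
 assert (Hphis : phi s = 0).
 { destruct (Rle_lt_or_eq_dec 0 (phi s) (Hphi0 s)) as [Hp|Hp]; [|auto]. exfalso.
   set (q := psi s * exp (K * a)).
   assert (Hq : 0 < q). { unfold q, psi. apply Rmult_lt_0_compat; [apply Rmult_lt_0_compat|]; auto; apply exp_pos. }
   assert (Hlow : forall s1, a < s1 <= s -> q <= phi s1).
   { intros s1 Hs1. specialize (Hmono s1 Hs1). unfold q.
     assert (exp (- K * s1) <= exp (- K * a)). { destruct (Req_dec K 0) as [->|nK]. right; f_equal; ring.
       apply Rlt_le, exp_increasing. nra. }
     assert (psi s1 <= exp (- K * a) * phi s1) by (unfold psi; apply Rmult_le_compat_r; auto).
     assert (exp (- K * a) * exp (K * a) = 1) by (rewrite <- exp_plus; replace (- K * a + K * a) with 0 by ring; apply exp_0).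
     assert (0 < exp (K * a)) by apply exp_pos.
     apply Rle_trans with (exp (- K * a) * phi s1 * exp (K * a)). apply Rmult_le_compat_r; lra.
     right. replace (exp (- K * a) * phi s1 * exp (K * a)) with (exp (- K * a) * exp (K * a) * phi s1) by ring. rewrite H1. ring. }
   set (eps := Rmin 1 (q / (INR n + 1))).
   assert (Heps : 0 < eps) by (unfold eps; apply Rmin_pos; [lra| apply Rdiv_lt_0_compat; [auto| pose proof (pos_INR n); lra]]).
   destruct (fin_delta n (fun i d => forall s1, a < s1 < b -> s1 - a < d -> Rabs (y s1 i) < eps)) as [d [Hd0 Hdd]].
   { intros i Hi. destruct (Hl i Hi eps Heps) as [del [Hdel Hdel2]]. exists del. split; auto.
     intros d' Hd' s1 Hs1 Hs1'. apply Hdel2; auto. lra. }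
   set (s1 := a + Rmin (d / 2) ((s - a) / 2)).
   assert (Hs1 : a < s1 <= s /\ s1 - a < d).
   { unfold s1. pose proof (Rmin_l (d/2) ((s-a)/2)). pose proof (Rmin_r (d/2) ((s-a)/2)).
     assert (0 < Rmin (d/2) ((s-a)/2)) by (apply Rmin_pos; lra). lra. }
   assert (Hsm : phi s1 <= INR n * eps).
   { unfold phi. rewrite <- rsum_const. apply rsum_le. intros i Hi.
     assert (Hy : Rabs (y s1 i) < eps) by (apply (Hdd i Hi d); lra).
     assert (eps <= 1) by (unfold eps; apply Rmin_l).
     pose proof (Rabs_pos (y s1 i)).
     replace (y s1 i * y s1 i) with (Rabs (y s1 i) * Rabs (y s1 i)). nra.
     rewrite <- Rabs_mult. apply Rabs_pos_eq. nra. }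
   assert (INR n * eps < q).
   { assert (eps <= q / (INR n + 1)) by (unfold eps; apply Rmin_r). pose proof (pos_INR n).
     apply Rle_lt_trans with (INR n * (q / (INR n + 1))). apply Rmult_le_compat_l; lra.
     apply (Rmult_lt_reg_r (INR n + 1)). lra. unfold Rdiv. replace (INR n * (q * / (INR n + 1)) * (INR n + 1)) with (INR n * q) by (field; lra). nra. }
   specialize (Hlow s1 ltac:(lra)). lra. }
 assert (y s i0 * y s i0 <= phi s). { unfold phi. apply (rsum_term_le n (fun i => y s i * y s i) i0); auto. intros; nra. }
 nra. Qed.

Lemma cont_small f x0 : continuity_pt f x0 -> f x0 = 0 ->
  forall eps, 0 < eps -> exists del, 0 < del /\ forall s, Rabs (s - x0) < del -> Rabs (f s) < eps.
Proof. intros H H0 eps Heps. unfold continuity_pt, continue_in, limit1_in, limit_in in H.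
 destruct (H eps Heps) as [del [Hdel H2]]. exists del; split; auto. intros s Hs.
 destruct (Req_dec s x0) as [->|ne]. rewrite H0, Rabs_R0; auto.
 specialize (H2 s (conj (conj I (not_eq_sym ne)) Hs)). simpl in H2. unfold R_dist in H2. rewrite H0, Rminus_0_r in H2. auto. Qed.

Lemma Em_dpl n A i j s : (i<n)%nat -> (j<n)%nat -> dpl (fun s => Em n A s i j) s (rsum n (fun l => A i l * Em n A s l j)).
Proof. intros. apply is_derive_Reals. apply Em_derive; auto. Qed.
Lemma Em_dpl_r n A i j s : (i<n)%nat -> (j<n)%nat -> dpl (fun s => Em n A s i j) s (rsum n (fun l => Em n A s i l * A l j)).
Proof. intros. apply is_derive_Reals. apply Em_derive_r; auto. Qed.

Lemma Em_nonneg_series n A s i j : nonneg_mat n A -> 0 <= s -> (i<n)%nat -> (j<n)%nat ->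
  0 <= Em n A s i j /\ (i = j -> 1 <= Em n A s i j).
Proof. intros HA Hs Hi Hj.
 assert (Hterm : forall k, 0 <= Ecoef n A i j k * s ^ k).
 { intros k. unfold Ecoef. apply Rmult_le_pos; [|apply pow_le; auto]. apply Rmult_le_pos.
   apply mpow_nonneg; auto. apply Rlt_le, Rinv_0_lt_compat, lt_0_INR, lt_O_fact. }
 split. unfold Em, PSeries. apply Series_nonneg; auto. apply Em_ex; auto.
 intros ->. unfold Em, PSeries. rewrite Series_incr_1 by (apply Em_ex; auto).
 assert (0 <= Series (fun k => Ecoef n A j j (S k) * s ^ S k)).
 { apply Series_nonneg. intros; apply Hterm. apply (ex_series_incr_1 (fun k => Ecoef n A j j k * s ^ k)). apply Em_ex; auto. }
 unfold Ecoef at 1. simpl in *. unfold idm. destruct (Nat.eq_dec j j); [|lia]. unfold Rdiv. rewrite Rinv_1. lra. Qed.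

Lemma Em_metzler n A s i j : Metzler n A -> 0 <= s -> (i<n)%nat -> (j<n)%nat ->
  0 <= Em n A s i j /\ (i = j -> 0 < Em n A s i j).
Proof. intros HA Hs Hi Hj.
 set (c := msz n A).
 set (Ac := fun i j => A i j + c * idm i j).
 assert (HAc : nonneg_mat n Ac).
 { intros i' j' Hi' Hj'. unfold Ac, idm. destruct (Nat.eq_dec i' j') as [->|ne].
   pose proof (msz_entry n A j' j' Hj' Hj'). pose proof (Rle_abs (- A j' j')). rewrite Rabs_Ropp in H0. fold c in H. lra.
   pose proof (HA i' j' Hi' Hj' ne). lra. }
 assert (Hrel : forall r, 0 <= r -> Em n A r i j = exp (- c * r) * Em n Ac r i j).
 { intros r Hr. destruct (Req_dec r 0) as [->|nr].
   rewrite !Em_0 by auto. replace (- c * 0) with 0 by ring. rewrite exp_0; ring.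
   set (y := fun r i => exp (- c * r) * Em n Ac r i j - Em n A r i j).
   assert (Hy := ode_unique n A 0 (r + 1) y).
   assert (Hy0 : y r i = 0).
   { apply Hy; try lra; auto.
     - intros s' Hs' i' Hi'. unfold y.
       replace (mvec n A (fun i => exp (- c * s') * Em n Ac s' i j - Em n A s' i j) i')
          with ((- c * exp (- c * s')) * Em n Ac s' i' j + exp (- c * s') * rsum n (fun l => Ac i' l * Em n Ac s' l j)
                - rsum n (fun l => A i' l * Em n A s' l j)).
       apply dpl_minus. apply (dpl_mult (fun r => exp (- c * r)) (fun r => Em n Ac r i' j)).
       apply dpl_expc. apply Em_dpl; auto. apply Em_dpl; auto.
       unfold mvec. rewrite (rsum_ext n (fun l => Ac i' l * Em n Ac s' l j)
           (fun l => A i' l * Em n Ac s' l j + c * (idm i' l * Em n Ac s' l j))) by (intros; unfold Ac; ring).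
       rewrite rsum_plus, rsum_scal, (rsum_delta_l n (fun l => Em n Ac s' l j) i' Hi').
       rewrite (rsum_ext n (fun j0 => A i' j0 * (exp (- c * s') * Em n Ac s' j0 j - Em n A s' j0 j)) (fun l => exp (- c * s') * (A i' l * Em n Ac s' l j) - A i' l * Em n A s' l j)) by (intros; ring).
       rewrite rsum_minus, rsum_scal. ring.
     - intros i' Hi' eps Heps.
       assert (Hc : continuity_pt (fun s => y s i') 0).
       { unfold y. apply continuity_pt_minus. apply continuity_pt_mult.
         apply (dpl_cont _ _ _ (dpl_expc (-c) 0)). apply Em_cont; auto. apply Em_cont; auto. }
       destruct (cont_small _ 0 Hc) with eps as [del [Hdel H2]]; auto.
       unfold y. rewrite !Em_0 by auto. replace (- c * 0) with 0 by ring. rewrite exp_0. ring.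
       exists del. split; auto. intros s' Hs' Hs2. apply H2. rewrite Rminus_0_r, Rabs_pos_eq; lra. }
   unfold y in Hy0. lra. }
 rewrite (Hrel s Hs). destruct (Em_nonneg_series n Ac s i j HAc Hs Hi Hj) as [H1 H2].
 pose proof (exp_pos (- c * s)). split. apply Rmult_le_pos; lra.
 intros Hij. specialize (H2 Hij). apply Rmult_lt_0_compat; lra. Qed.

Lemma Em_tr n A s i j : (i<n)%nat -> (j<n)%nat -> Em n (mtr A) s i j = Em n A s j i.
Proof. intros. unfold Em, PSeries. apply Series_ext. intros k. unfold Ecoef. rewrite mpow_tr; auto. Qed.

Lemma vnorm_mvec n M v : vnorm n (mvec n M v) <= msz n M * vnorm n v.
Proof. unfold vnorm, mvec.
 apply Rle_trans with (rsum n (fun i => rsum n (fun j => Rabs (M i j) * Rabs (v j)))).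
 apply rsum_le; intros. eapply Rle_trans. apply rsum_abs. apply rsum_le; intros. rewrite Rabs_mult; lra.
 rewrite rsum_swap. rewrite <- rsum_scal. apply rsum_le; intros j Hj. rewrite rsum_scal_r.
 apply Rmult_le_compat_r. apply Rabs_pos. apply msz_col; auto. Qed.

Lemma vnorm_nonneg n v : 0 <= vnorm n v.
Proof. apply rsum_nonneg; intros; apply Rabs_pos. Qed.

Lemma msz_le n M c : 0 <= c -> (forall i j, (i<n)%nat -> (j<n)%nat -> Rabs (M i j) <= c) -> msz n M <= INR n * INR n * c.
Proof. intros Hc H. unfold msz. apply Rle_trans with (rsum n (fun i => rsum n (fun j => c))).
 apply rsum_le; intros; apply rsum_le; intros; auto. rewrite rsum_const, rsum_const. lra. Qed.

Lemma Em_bound n A s i j : 0 <= s -> (i<n)%nat -> (j<n)%nat -> Rabs (Em n A s i j) <= exp (msz n A * s).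
Proof. intros Hs Hi Hj. unfold Em, PSeries.
 assert (Hexp : ex_series (fun k => / INR (fact k) * (msz n A * s) ^ k)).
 { apply ex_pseries_R. eexists. apply is_exp_Reals. }
 assert (Hdom : forall k, Rabs (Ecoef n A i j k * s ^ k) <= / INR (fact k) * (msz n A * s) ^ k).
 { intros k. unfold Ecoef. rewrite Rabs_mult. unfold Rdiv. rewrite Rabs_mult.
   rewrite (Rabs_pos_eq (/ INR (fact k))) by (apply Rlt_le, Rinv_0_lt_compat, lt_0_INR, lt_O_fact).
   rewrite (Rabs_pos_eq (s ^ k)) by (apply pow_le; auto). rewrite Rpow_mult_distr.
   pose proof (mpow_bound n A k i j Hi Hj). assert (0 < / INR (fact k)) by (apply Rinv_0_lt_compat, lt_0_INR, lt_O_fact).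
   assert (0 <= s ^ k) by (apply pow_le; auto). pose proof (Rabs_pos (mpow n A k i j)).
   apply Rle_trans with (msz n A ^ k * / INR (fact k) * s ^ k). apply Rmult_le_compat_r; auto. apply Rmult_le_compat_r; lra.
   right; ring. }
 assert (Habs : ex_series (fun k => Rabs (Ecoef n A i j k * s ^ k))).
 { apply (@ex_series_le _ R_CompleteNormedModule _ (fun k => / INR (fact k) * (msz n A * s) ^ k)); auto.
   intros k. unfold norm; simpl; unfold abs; simpl. rewrite Rabs_Rabsolu. auto. }
 eapply Rle_trans. apply Series_Rabs; auto.
 rewrite exp_Reals. unfold PSeries. apply Series_le; auto. intros k; split. apply Rabs_pos. auto. Qed.

Lemma Em_shift_dpl n A a i l r : (i<n)%nat -> (l<n)%nat ->
  dpl (fun r => Em n A (r - a) i l) r (rsum n (fun m => A i m * Em n A (r - a) m l)).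
Proof. intros. replace (rsum n (fun m => A i m * Em n A (r - a) m l)) with (rsum n (fun m => A i m * Em n A (r - a) m l) * 1) by ring.
 apply (derivable_pt_lim_comp (fun r => r - a) (fun s => Em n A s i l)).
 replace 1 with (1 - 0) by ring. apply dpl_minus. apply dpl_id. apply dpl_const.
 apply Em_dpl; auto. Qed.

Lemma Em_refl_dpl n A b i l r : (i<n)%nat -> (l<n)%nat ->
  dpl (fun r => Em n A (b - r) i l) r (- rsum n (fun m => Em n A (b - r) i m * A m l)).
Proof. intros. replace (- rsum n (fun m => Em n A (b - r) i m * A m l)) with (rsum n (fun m => Em n A (b - r) i m * A m l) * (0 - 1)) by ring.
 apply (derivable_pt_lim_comp (fun r => b - r) (fun s => Em n A s i l)).
 apply dpl_minus. apply dpl_const. apply dpl_id.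
 apply Em_dpl_r; auto. Qed.

Definition flow n A a (w : vec) (r : R) : vec := fun i => mvec n (Em n A (r - a)) w i.

Lemma flow_dpl n A a w r i : (i<n)%nat -> dpl (fun r => flow n A a w r i) r (mvec n A (flow n A a w r) i).
Proof. intros Hi. unfold flow, mvec.
 replace (rsum n (fun j => A i j * rsum n (fun j0 => Em n A (r - a) j j0 * w j0)))
   with (rsum n (fun l => rsum n (fun m => A i m * Em n A (r - a) m l) * w l)).
 apply (dpl_rsum n (fun l r => Em n A (r - a) i l * w l)). intros l Hl.
 pose proof (dpl_mult (fun r => Em n A (r - a) i l) (fun _ => w l) r _ 0 (Em_shift_dpl n A a i l r Hi Hl) (dpl_const (w l) r)) as H.
 replace (rsum n (fun m => A i m * Em n A (r - a) m l) * w l) with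
   (rsum n (fun m => A i m * Em n A (r - a) m l) * w l + Em n A (r - a) i l * 0) by ring. apply H.
 transitivity (rsum n (fun l => rsum n (fun m => A i m * Em n A (r - a) m l * w l))).
 apply rsum_ext; intros; rewrite rsum_scal_r; auto.
 rewrite rsum_swap. apply rsum_ext; intros. rewrite <- rsum_scal. apply rsum_ext; intros; ring. Qed.

Lemma flow_cont n A a w r i : (i<n)%nat -> continuity_pt (fun r => flow n A a w r i) r.
Proof. intros. eapply dpl_cont. apply flow_dpl; auto. Qed.

Lemma flow_at n A a w i : (i<n)%nat -> flow n A a w a i = w i.
Proof. intros. unfold flow, mvec. rewrite Rminus_eq_0.
 rewrite (rsum_ext n _ (fun j => idm i j * w j)) by (intros; rewrite Em_0; auto). apply rsum_delta_l; auto. Qed.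

Lemma flow_end n A a T w i : (i<n)%nat -> flow n A a w (a + T) i = mvec n (Em n A T) w i.
Proof. intros. unfold flow. replace (a + T - a) with T by ring. auto. Qed.

Lemma lim_cont_eq f g D x0 : (forall x, D x -> f x = g x) -> continuity_pt g x0 -> limit1_in f D (g x0) x0.
Proof. intros He Hc eps Heps. unfold continuity_pt, continue_in, limit1_in, limit_in in Hc.
 destruct (Hc eps Heps) as [del [Hdel H2]]. exists del; split; auto. intros x [Dx Hx].
 rewrite He by auto. destruct (Req_dec x x0) as [->|ne]. simpl. unfold R_dist. rewrite Rminus_eq_0, Rabs_R0; lra.
 apply H2. split; auto. split; auto. exact I. Qed.

Lemma lim1_get f D l x0 : limit1_in f D l x0 -> forall eps, 0 < eps -> exists del, 0 < del /\
   forall x, D x -> Rabs (x - x0) < del -> Rabs (f x - l) < eps.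
Proof. intros H eps He. destruct (H eps He) as [del [Hd H2]]. exists del; split; auto.
 intros x Dx Hx. apply (H2 x (conj Dx Hx)). Qed.

Lemma lim1_mk f D l x0 : (forall eps, 0 < eps -> exists del, 0 < del /\
   forall x, D x -> Rabs (x - x0) < del -> Rabs (f x - l) < eps) -> limit1_in f D l x0.
Proof. intros H eps He. destruct (H eps He) as [del [Hd H2]]. exists del; split; auto.
 intros x [Dx Hx]. apply (H2 x Dx Hx). Qed.

Lemma interval_flow n A (x : R -> vec) a b (z : vec) :
  a < b ->
  (forall s, a < s < b -> forall i, (i<n)%nat -> dpl (fun r => x r i) s (mvec n A (x s) i)) ->
  (forall i, (i<n)%nat -> limit1_in (fun r => x r i) (fun r => a < r < b) (z i) a) ->
  forall s, a < s < b -> forall i, (i<n)%nat -> x s i = flow n A a z s i.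
Proof. intros Hab Hd Hl s Hs i Hi.
 set (y := fun r i => x r i - flow n A a z r i).
 assert (Hy := ode_unique n A a b y).
 assert (y s i = 0). apply Hy; auto.
 - intros s' Hs' i' Hi'. unfold y.
   replace (mvec n A (fun i => x s' i - flow n A a z s' i) i') with (mvec n A (x s') i' - mvec n A (flow n A a z s') i').
   apply dpl_minus. apply Hd; auto. apply flow_dpl; auto.
   unfold mvec. rewrite <- rsum_minus. apply rsum_ext; intros; ring.
 - intros i' Hi' eps Heps.
   destruct (lim1_get _ _ _ _ (Hl i' Hi') (eps/2) ltac:(lra)) as [d1 [Hd1 H1]].
   destruct (cont_small (fun r => flow n A a z r i' - z i') a) with (eps := eps / 2) as [d2 [Hd2 H2]].
   apply continuity_pt_minus. apply flow_cont; auto. apply continuity_pt_const. intros u v; auto.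
   rewrite flow_at; auto; ring. lra.
   exists (Rmin d1 d2). split. apply Rmin_pos; auto.
   intros s' Hs' Hs2. pose proof (Rmin_l d1 d2). pose proof (Rmin_r d1 d2).
   specialize (H1 s' Hs' ltac:(rewrite Rabs_pos_eq; lra)).
   specialize (H2 s' ltac:(rewrite Rabs_pos_eq; lra)).
   unfold y. replace (x s' i' - flow n A a z s' i') with ((x s' i' - z i') - (flow n A a z s' i' - z i')) by ring.
   eapply Rle_lt_trans. apply Rabs_triang. rewrite Rabs_Ropp. lra.
 - unfold y in H. lra. Qed.

Lemma tk_formula (tk : nat -> R) T : (forall k, tk (S k) - tk k = T) -> forall k, tk k = tk 0%nat + INR k * T.
Proof. intros H k. induction k. simpl; ring. rewrite S_INR. specialize (H k). lra. Qed.

Lemma find_k (tk : nat -> R) T : 0 < T -> (forall k, tk (S k) - tk k = T) ->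
  forall t, tk 0%nat <= t -> exists k, tk k <= t < tk (S k).
Proof. intros HT H t Ht. pose proof (tk_formula tk T H) as F.
 assert (Hm : forall m, t < tk 0%nat + INR m * T -> exists k, tk k <= t < tk (S k)).
 { induction m; intros Hm. simpl in Hm. lra.
   destruct (Rlt_or_le t (tk 0%nat + INR m * T)) as [h|h]. apply IHm; auto.
   exists m. rewrite (F m), (F (S m)). split; auto. }
 destruct (archimed ((t - tk 0%nat) / T)) as [H1 _].
 assert (0 <= IZR (up ((t - tk 0%nat) / T))). { assert (0 <= (t - tk 0%nat) / T) by (apply Rdiv_le_0_compat; lra). lra. }
 apply (Hm (Z.to_nat (up ((t - tk 0%nat) / T)))).
 rewrite INR_IZR_INZ, Z2Nat.id. 2:{ apply le_IZR; auto. }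
 assert (t - tk 0%nat < IZR (up ((t - tk 0%nat) / T)) * T).
 { apply (Rmult_lt_compat_r T) in H1; auto. unfold Rdiv in H1. rewrite Rmult_assoc, Rinv_l, Rmult_1_r in H1; lra. }
 lra. Qed.

Lemma adh_right a b : a < b -> adhDa (fun r => a < r < b) b.
Proof. intros Hab alp Halp. exists (Rmax (a + (b - a)/2) (b - alp/2)).
 pose proof (Rmax_l (a + (b-a)/2) (b - alp/2)). pose proof (Rmax_r (a + (b-a)/2) (b - alp/2)).
 assert (Rmax (a + (b-a)/2) (b - alp/2) < b). { unfold Rmax. destruct (Rle_dec _ _); lra. }
 split. lra. unfold R_dist. rewrite Rabs_left by lra. lra. Qed.

Lemma vnorm_ext n u v : (forall i, (i<n)%nat -> u i = v i) -> vnorm n u = vnorm n v.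
Proof. intros H. unfold vnorm. apply rsum_ext; intros; rewrite H; auto. Qed.

Lemma exp_le_mono a b : a <= b -> exp a <= exp b.
Proof. intros H. destruct (Req_dec a b) as [->|ne]. lra. left; apply exp_increasing; lra. Qed.

Section Sol.
Variables (n : nat) (A J : mat) (T : R) (tk : nat -> R) (x0 : vec) (x : R -> vec).
Hypothesis HT : 0 < T.
Hypothesis Htk : forall k, tk (S k) - tk k = T.
Hypothesis Hsol : is_solution n A J tk x0 x.

Let Q := mmul n (Em n A T) J.

Lemma sol_between k t : tk k < t < tk (S k) -> forall i, (i<n)%nat ->
  x t i = flow n A (tk k) (fun i => mvec n J (x (tk k)) i) t i.
Proof. intros Ht i Hi. destruct Hsol as [H1 [H2 [H3 H4]]].
 apply (interval_flow n A x (tk k) (tk (S k))); auto. specialize (Htk k); lra.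
 intros s Hs; apply (H2 k); auto. Qed.

Lemma sol_at k : forall i, (i<n)%nat -> x (tk k) i = mvec n (mpow n Q k) x0 i.
Proof. induction k; intros i Hi.
 - destruct Hsol as [H1 _]. rewrite H1 by auto. simpl. unfold mvec. symmetry. apply (rsum_delta_l n x0 i Hi).
 - destruct Hsol as [H1 [H2 [H3 H4]]].
   assert (Hab : tk k < tk (S k)) by (specialize (Htk k); lra).
   assert (E1 : x (tk (S k)) i = flow n A (tk k) (fun i => mvec n J (x (tk k)) i) (tk (S k)) i).
   { apply (single_limit (fun r => x r i) (fun r => tk k < r < tk (S k)) _ _ (tk (S k))).
     apply adh_right; auto. apply H3; auto.
     apply (lim_cont_eq _ (fun r => flow n A (tk k) (fun i => mvec n J (x (tk k)) i) r i)). intros r Hr. apply (sol_between k); auto. apply flow_cont; auto. }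
   rewrite E1. replace (tk (S k)) with (tk k + T) by (specialize (Htk k); lra). rewrite flow_end by auto.
   simpl (mpow n Q (S k)). rewrite mvec_mmul. unfold Q. rewrite mvec_mmul.
   apply mvec_ext; auto. intros j Hj. apply mvec_ext; auto. Qed.

Lemma sol_bound s c : 0 <= s < 1 -> 0 <= c -> (forall k i j, (i<n)%nat -> (j<n)%nat -> 0 <= mpow n Q k i j <= c * s ^ k) ->
  forall t k, tk k <= t < tk (S k) ->
  vnorm n (x t) <= INR n * INR n * c * (1 + INR n * INR n * exp (msz n A * T) * msz n J) * s ^ k * vnorm n x0.
Proof. intros Hs Hc Hg t k Ht.
 pose proof (vnorm_nonneg n x0) as Hv0. pose proof (pos_INR n) as Hn. pose proof (msz_nonneg n J) as HJ.
 assert (Hsk : 0 <= s ^ k) by (apply pow_le; lra).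
 assert (HQk : msz n (mpow n Q k) <= INR n * INR n * (c * s ^ k)).
 { apply msz_le. apply Rmult_le_pos; auto. intros i j Hi Hj. specialize (Hg k i j Hi Hj). rewrite Rabs_pos_eq; lra. }
 assert (Hxk : vnorm n (x (tk k)) <= INR n * INR n * (c * s ^ k) * vnorm n x0).
 { rewrite (vnorm_ext n _ (mvec n (mpow n Q k) x0)) by (intros; apply sol_at; auto).
   eapply Rle_trans. apply vnorm_mvec. apply Rmult_le_compat_r; auto. }
 assert (Hexp : 0 < exp (msz n A * T)) by apply exp_pos.
 assert (0 <= INR n * INR n * exp (msz n A * T) * msz n J) by (repeat apply Rmult_le_pos; lra).
 assert (0 <= INR n * INR n * (c * s ^ k) * vnorm n x0) by (repeat apply Rmult_le_pos; lra).
 destruct (Req_dec t (tk k)) as [->|ne].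
 - eapply Rle_trans. apply Hxk. nra.
 - rewrite (vnorm_ext n _ (flow n A (tk k) (fun i => mvec n J (x (tk k)) i) t)) by (intros; apply (sol_between k); auto; lra).
   unfold flow. eapply Rle_trans. apply vnorm_mvec.
   assert (HE : msz n (Em n A (t - tk k)) <= INR n * INR n * exp (msz n A * T)).
   { apply msz_le. lra. intros i j Hi Hj. eapply Rle_trans. apply Em_bound; auto. lra.
     apply exp_le_mono. apply Rmult_le_compat_l. apply msz_nonneg. specialize (Htk k). lra. }
   assert (HJx : vnorm n (fun i => mvec n J (x (tk k)) i) <= msz n J * (INR n * INR n * (c * s ^ k) * vnorm n x0)).
   { eapply Rle_trans. apply vnorm_mvec. apply Rmult_le_compat_l; auto. }
   assert (0 <= vnorm n (fun i => mvec n J (x (tk k)) i)) by apply vnorm_nonneg.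
   apply Rle_trans with (INR n * INR n * exp (msz n A * T) * (msz n J * (INR n * INR n * (c * s ^ k) * vnorm n x0))).
   apply Rle_trans with (INR n * INR n * exp (msz n A * T) * vnorm n (fun i => mvec n J (x (tk k)) i)).
   apply Rmult_le_compat_r; auto. apply Rmult_le_compat_l. nra. auto.
   nra. Qed.
End Sol.

Lemma pow_le_one s k : 0 <= s <= 1 -> s ^ k <= 1.
Proof. intros H. induction k; simpl. lra. assert (0 <= s ^ k) by (apply pow_le; lra). nra. Qed.

Lemma Rc_to_Pa n A J T : 0 < T -> nonneg_mat n (mmul n (Em n A T) J) -> Rc n (mmul n (Em n A T) J) ->
  AS_constant_dwell n A J T.
Proof. intros HT HQ HR tk Htk.
 destruct (Rc_geo n _ HQ HR) as [s [c [Hs [Hc Hg]]]].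
 assert (Hg' : forall k i j, (i<n)%nat -> (j<n)%nat -> 0 <= mpow n (mmul n (Em n A T) J) k i j <= c * s ^ k).
 { intros; split; [apply mpow_nonneg|apply Hg]; auto. }
 set (C := INR n * INR n * c * (1 + INR n * INR n * exp (msz n A * T) * msz n J)).
 assert (HC : 0 <= C). { unfold C. pose proof (pos_INR n). pose proof (exp_pos (msz n A * T)). pose proof (msz_nonneg n J).
   assert (0 <= INR n * INR n * exp (msz n A * T) * msz n J) by (repeat apply Rmult_le_pos; lra).
   repeat apply Rmult_le_pos; lra. }
 assert (Hb : forall x0 x, is_solution n A J tk x0 x -> forall t k, tk k <= t < tk (S k) -> vnorm n (x t) <= C * s ^ k * vnorm n x0).
 { intros x0 x Hsol t k Ht. apply (sol_bound n A J T tk x0 x HT Htk Hsol s c Hs Hc Hg' t k Ht). }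
 pose proof (tk_formula tk T Htk) as F.
 split.
 - intros eps Heps. exists (eps / (C + 1)). split. apply Rdiv_lt_0_compat; lra.
   intros x0 x Hsol Hx0 t Ht. destruct (find_k tk T HT Htk t Ht) as [k Hk].
   eapply Rle_lt_trans. apply (Hb x0 x Hsol t k Hk).
   assert (s ^ k <= 1) by (apply pow_le_one; lra). assert (0 <= s ^ k) by (apply pow_le; lra).
   pose proof (vnorm_nonneg n x0).
   apply Rle_lt_trans with (C * vnorm n x0). assert (C * s ^ k <= C) by nra. nra.
   apply Rle_lt_trans with (C * (eps / (C + 1))). apply Rmult_le_compat_l; lra.
   apply (Rmult_lt_reg_r (C + 1)). lra. unfold Rdiv. replace (C * (eps * / (C + 1)) * (C + 1)) with (C * eps) by (field; lra). nra.
 - intros x0 x Hsol eps Heps.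
   pose proof (vnorm_nonneg n x0) as Hv0.
   destruct (pow_lt_1_zero s ltac:(rewrite Rabs_pos_eq; lra) (eps / (C * vnorm n x0 + 1))) as [K HK].
   apply Rdiv_lt_0_compat; nra.
   exists (tk K). intros t Ht.
   assert (Ht0 : tk 0%nat <= t). { rewrite (F K) in Ht. pose proof (pos_INR K). nra. }
   destruct (find_k tk T HT Htk t Ht0) as [k Hk].
   assert (HKk : (K <= k)%nat). { destruct (Compare_dec.le_lt_dec K k) as [h|h]; auto. exfalso.
     rewrite (F K) in Ht. rewrite (F (S k)) in Hk. assert (INR (S k) <= INR K) by (apply le_INR; lia). nra. }
   specialize (HK k HKk). rewrite Rabs_pos_eq in HK by (apply pow_le; lra).
   eapply Rle_lt_trans. apply (Hb x0 x Hsol t k Hk).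
   assert (0 <= s ^ k) by (apply pow_le; lra).
   apply Rle_lt_trans with ((C * vnorm n x0) * (eps / (C * vnorm n x0 + 1))). 
   replace (C * s ^ k * vnorm n x0) with ((C * vnorm n x0) * s ^ k) by ring. apply Rmult_le_compat_l; nra.
   apply (Rmult_lt_reg_r (C * vnorm n x0 + 1)). nra. unfold Rdiv.
   replace (C * vnorm n x0 * (eps * / (C * vnorm n x0 + 1)) * (C * vnorm n x0 + 1)) with (C * vnorm n x0 * eps) by (field; nra). nra.
Qed.

Definition kidx (T t : R) : nat := Z.to_nat (- up (- (t / T))).

Lemma kidx_spec T t k : 0 < T -> INR k * T < t <= INR (S k) * T -> kidx T t = k.
Proof. intros HT Ht. unfold kidx.
 assert (Hz : INR k < t / T <= INR k + 1).
 { rewrite S_INR in Ht. split. apply (Rmult_lt_reg_r T); auto. unfold Rdiv. rewrite Rmult_assoc, Rinv_l, Rmult_1_r; lra.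
   apply (Rmult_le_reg_r T); auto. unfold Rdiv. rewrite Rmult_assoc, Rinv_l, Rmult_1_r; lra. }
 rewrite <- (tech_up (- (t / T)) (- Z.of_nat k)).
 rewrite Z.opp_involutive. apply Nat2Z.id.
 rewrite opp_IZR, <- INR_IZR_INZ. lra.
 rewrite opp_IZR, <- INR_IZR_INZ. lra. Qed.

Section Build.
Variables (n : nat) (A J : mat) (T : R) (j : nat).
Hypothesis HT : 0 < T.
Hypothesis Hj : (j < n)%nat.

Let Q := mmul n (Em n A T) J.
Let P (k : nat) : vec := fun i => mpow n Q k i j.
Let F (k : nat) : R -> vec := flow n A (INR k * T) (fun i => mvec n J (P k) i).
Let xs (t : R) : vec := if Rle_dec t 0 then P 0%nat else F (kidx T t) t.
Let tks (k : nat) : R := INR k * T.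

Lemma xs_F k t : INR k * T < t <= INR (S k) * T -> xs t = F k t.
Proof. intros Ht. unfold xs. destruct (Rle_dec t 0) as [h|h].
 exfalso. pose proof (pos_INR k). nra. rewrite (kidx_spec T t k); auto. Qed.

Lemma xs_tk k i : (i<n)%nat -> xs (tks k) i = P k i.
Proof. intros Hi. destruct k as [|k].
 - unfold xs, tks. simpl. destruct (Rle_dec (0 * T) 0) as [h|h]; auto. exfalso; lra.
 - unfold tks. rewrite (xs_F k) by (rewrite S_INR; lra).
   unfold F. replace (INR (S k) * T) with (INR k * T + T) by (rewrite S_INR; ring).
   rewrite flow_end by auto. unfold P. simpl (mpow n Q (S k)). unfold Q.
   change (mvec n (Em n A T) (fun i => mvec n J (fun i0 => mpow n (mmul n (Em n A T) J) k i0 j) i) i =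
           mmul n (mmul n (Em n A T) J) (mpow n (mmul n (Em n A T) J) k) i j).
   rewrite <- mvec_mmul. unfold mvec, mmul. apply rsum_ext; auto. Qed.

Lemma xs_sol : is_solution n A J tks (P 0%nat) xs.
Proof. split; [|split; [|split]].
 - intros i Hi. apply xs_tk; auto.
 - intros k s Hs i Hi. unfold tks in Hs.
   apply (dpl_ext_loc (fun r => F k r i) _ s _ (INR k * T) (INR (S k) * T)); auto.
   intros r Hr. rewrite (xs_F k r); auto. lra.
   replace (mvec n A (xs s) i) with (mvec n A (F k s) i). apply flow_dpl; auto.
   rewrite (xs_F k s); auto. lra.
 - intros k i Hi. unfold tks.
   replace (xs (INR (S k) * T) i) with (F k (INR (S k) * T) i).
   apply (lim_cont_eq _ (fun r => F k r i)). intros r Hr. rewrite (xs_F k r); auto. lra. apply flow_cont; auto.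
   rewrite (xs_F k); auto. pose proof (pos_INR k). rewrite S_INR. lra.
 - intros k i Hi. unfold tks.
   replace (mvec n J (xs (INR k * T)) i) with (F k (INR k * T) i).
   apply (lim_cont_eq _ (fun r => F k r i)). intros r Hr. rewrite (xs_F k r); auto. lra. apply flow_cont; auto.
   unfold F. rewrite flow_at by auto. apply mvec_ext; auto. intros l Hl. symmetry. apply (xs_tk k l Hl). Qed.

Lemma Pa_col : AS_constant_dwell n A J T ->
  forall eps, 0 < eps -> exists K, forall k, (K <= k)%nat -> forall i, (i<n)%nat -> Rabs (mpow n Q k i j) < eps.
Proof. intros HPa eps Heps.
 assert (Htk : forall k, tks (S k) - tks k = T) by (intros; unfold tks; rewrite S_INR; ring).
 destruct (HPa tks Htk) as [_ Hatt].
 destruct (Hatt _ _ xs_sol eps Heps) as [T0 HT0].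
 destruct (archimed (T0 / T)) as [Hup _].
 exists (Z.to_nat (up (T0 / T))). intros k Hk i Hi.
 assert (Hle : T0 <= tks k).
 { unfold tks. destruct (Rle_or_lt T0 0) as [h|h]. pose proof (pos_INR k). nra.
   assert (IZR (up (T0 / T)) <= INR k).
   { rewrite INR_IZR_INZ. apply IZR_le. assert (0 <= up (T0 / T))%Z.
     { apply le_IZR. assert (0 < T0 / T) by (apply Rdiv_lt_0_compat; lra). lra. }
     lia. }
   assert (T0 / T < INR k) by lra.
   apply (Rmult_lt_compat_r T) in H0; auto. unfold Rdiv in H0. rewrite Rmult_assoc, Rinv_l, Rmult_1_r in H0; lra. }
 specialize (HT0 (tks k) Hle).
 eapply Rle_lt_trans; [|apply HT0]. unfold vnorm.
 assert (E : mpow n Q k i j = xs (tks k) i) by (rewrite (xs_tk k i Hi); reflexivity). rewrite E. apply (rsum_term_le n (fun i => Rabs (xs (tks k) i)) i); auto. intros; apply Rabs_pos. Qed.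
End Build.

Lemma Pa_to_Dk n A J T : 0 < T -> AS_constant_dwell n A J T -> Dk n (mmul n (Em n A T) J).
Proof. intros HT HPa eps Heps.
 destruct (fin_max_nat n (fun j k => forall i, (i<n)%nat -> Rabs (mpow n (mmul n (Em n A T) J) k i j) < eps)) as [K HK].
 intros j Hj. apply (Pa_col n A J T j HT Hj HPa eps Heps).
 exists K. intros i j Hi Hj. apply HK; auto. Qed.

Lemma lim1_ext f g D l x0 : (forall x, D x -> f x = g x) -> limit1_in f D l x0 -> limit1_in g D l x0.
Proof. intros He H eps Heps. destruct (H eps Heps) as [d [Hd H2]]. exists d; split; auto.
 intros x [Dx Hx]. rewrite <- He by auto. apply H2; auto. Qed.

Definition Dom a b tau := fun s => a <= s <= b /\ s <> tau.

Lemma dpl_lim f tau l D : (forall s, D s -> s <> tau) -> dpl f tau l ->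
  limit1_in (fun s => (f s - f tau) / (s - tau)) D l tau.
Proof. intros HD H. apply lim1_mk. intros eps Heps.
 destruct (H eps Heps) as [d Hd]. exists d; split. apply cond_pos.
 intros s Ds Hs. specialize (HD s Ds). specialize (Hd (s - tau) ltac:(lra) Hs).
 replace (tau + (s - tau)) with s in Hd by ring. auto. Qed.

Lemma dpl_deriv_on a b f f' : (forall tau, a <= tau <= b -> dpl f tau (f' tau)) -> deriv_on a b f f'.
Proof. intros H tau Ht. apply dpl_lim. intros s [_ Hs]; auto. auto. Qed.

Lemma deriv_on_dpl a b f f' tau : deriv_on a b f f' -> a < tau < b -> dpl f tau (f' tau).
Proof. intros H Ht eps Heps. destruct (lim1_get _ _ _ _ (H tau ltac:(lra)) eps Heps) as [d [Hd H2]].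
 assert (Hd' : 0 < Rmin d (Rmin (tau - a) (b - tau))) by (repeat apply Rmin_pos; lra).
 exists (mkposreal _ Hd'). intros h Hh0 Hh. simpl in Hh.
 pose proof (Rmin_l d (Rmin (tau - a) (b - tau))). pose proof (Rmin_r d (Rmin (tau - a) (b - tau))).
 pose proof (Rmin_l (tau - a) (b - tau)). pose proof (Rmin_r (tau - a) (b - tau)).
 apply Rabs_def2 in Hh as Hh2.
 specialize (H2 (tau + h)). replace (tau + h - tau) with h in H2 by ring. apply H2.
 unfold Dom; split; [lra|]. intros E; apply Hh0; lra. lra. Qed.

Lemma deriv_on_cont a b f f' tau : deriv_on a b f f' -> a <= tau <= b ->
  forall eps, 0 < eps -> exists del, 0 < del /\ forall s, a <= s <= b -> Rabs (s - tau) < del -> Rabs (f s - f tau) < eps.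
Proof. intros H Ht eps Heps. destruct (lim1_get _ _ _ _ (H tau Ht) 1 ltac:(lra)) as [d [Hd H2]].
 set (L := Rabs (f' tau) + 1).
 assert (HL : 0 < L) by (unfold L; pose proof (Rabs_pos (f' tau)); lra).
 exists (Rmin d (eps / L)). split. apply Rmin_pos; auto. apply Rdiv_lt_0_compat; auto.
 intros s Hs Hst. pose proof (Rmin_l d (eps / L)). pose proof (Rmin_r d (eps / L)).
 destruct (Req_dec s tau) as [->|ne]. rewrite Rminus_eq_0, Rabs_R0; auto.
 specialize (H2 s (conj Hs ne) ltac:(lra)).
 assert (Rabs ((f s - f tau) / (s - tau)) < L).
 { unfold L. eapply Rle_lt_trans. 2:{ apply Rplus_lt_compat_l. apply H2. }
   replace ((f s - f tau) / (s - tau)) with (f' tau + ((f s - f tau) / (s - tau) - f' tau)) at 1 by ring.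
   apply Rabs_triang. }
 replace (f s - f tau) with ((f s - f tau) / (s - tau) * (s - tau)) by (field; lra).
 rewrite Rabs_mult. assert (0 < Rabs (s - tau)) by (apply Rabs_pos_lt; lra).
 apply Rle_lt_trans with (L * Rabs (s - tau)). apply Rmult_le_compat_r; lra.
 apply Rlt_le_trans with (L * (eps / L)). apply Rmult_lt_compat_l; lra. right; field; lra. Qed.

Definition clamp a b t := Rmin b (Rmax a t).

Lemma clamp_in a b t : a <= b -> a <= clamp a b t <= b.
Proof. intros. unfold clamp, Rmin, Rmax. destruct (Rle_dec a t); destruct (Rle_dec b _); lra. Qed.
Lemma clamp_id a b t : a <= t <= b -> clamp a b t = t.
Proof. intros. unfold clamp, Rmin, Rmax. destruct (Rle_dec a t); destruct (Rle_dec b _); lra. Qed.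
Lemma clamp_lip a b t tau : a <= tau <= b -> Rabs (clamp a b t - tau) <= Rabs (t - tau).
Proof. intros. unfold clamp, Rmin, Rmax. destruct (Rle_dec a t); destruct (Rle_dec b _);
 unfold Rabs; repeat destruct Rcase_abs; lra. Qed.

Lemma deriv_on_mono a b f f' : a < b -> deriv_on a b f f' -> (forall tau, a <= tau <= b -> 0 <= f' tau) -> f a <= f b.
Proof. intros Hab H Hp.
 set (fc := fun t => f (clamp a b t)).
 destruct (MVT_gen fc a b f') as [c [Hc E]].
 - intros t Ht. rewrite Rmin_left, Rmax_right in Ht by lra. apply is_derive_Reals.
   apply (dpl_ext_loc f fc t _ a b); auto. intros r Hr. unfold fc. rewrite clamp_id; auto; lra.
   apply (deriv_on_dpl a b); auto.
 - intros t Ht. rewrite Rmin_left, Rmax_right in Ht by lra.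
   intros eps Heps. destruct (deriv_on_cont a b f f' t H Ht eps Heps) as [d [Hd H2]].
   exists d. split; auto. intros s [_ Hs]. simpl in *. unfold R_dist in *. unfold fc.
   rewrite (clamp_id a b t) by lra. apply H2. apply clamp_in; lra.
   eapply Rle_lt_trans. apply clamp_lip; lra. auto.
 - rewrite Rmin_left, Rmax_right in Hc by lra. unfold fc in E. rewrite !clamp_id in E by lra.
   specialize (Hp c Hc). nra. Qed.

Lemma deriv_on_mult_smooth a b f f' h h' : deriv_on a b f f' -> (forall tau, dpl h tau (h' tau)) ->
  deriv_on a b (fun t => f t * h t) (fun t => f' t * h t + f t * h' t).
Proof. intros Hf Hh tau Ht.
 apply (lim1_ext (fun s => (f s - f tau) / (s - tau) * h s + f tau * ((h s - h tau) / (s - tau)))).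
 intros s [_ Hs]. field. lra.
 apply limit_plus. apply limit_mul. apply Hf; auto.
 apply (lim_cont_eq _ h). auto. eapply dpl_cont; apply Hh.
 apply (limit_mul (fun _ => f tau)). apply (limit_free (fun _ => f tau) _ tau).
 apply dpl_lim. intros s [_ Hs]; auto. apply Hh. Qed.

Lemma deriv_on_rsum a b n (f f' : nat -> R -> R) : (forall i, (i<n)%nat -> deriv_on a b (f i) (f' i)) ->
  deriv_on a b (fun t => rsum n (fun i => f i t)) (fun t => rsum n (fun i => f' i t)).
Proof. induction n; intros H tau Ht; simpl.
 apply (lim1_ext (fun _ => 0)). intros s [_ Hs]. field. lra. apply (limit_free (fun _ => 0) _ tau).
 apply (lim1_ext (fun s => (rsum n (fun i => f i s) - rsum n (fun i => f i tau)) / (s - tau) + (f n s - f n tau) / (s - tau))).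
 intros s [_ Hs]. field. lra. apply limit_plus. apply IHn; auto. apply H; auto. Qed.

Lemma deriv_on_ext a b f f' g' : deriv_on a b f f' -> (forall t, a <= t <= b -> f' t = g' t) -> deriv_on a b f g'.
Proof. intros H He tau Ht. rewrite <- He by auto. apply H; auto. Qed.

Lemma Em_refl_dpl_l n A b i l r : (i<n)%nat -> (l<n)%nat ->
  dpl (fun r => Em n A (b - r) i l) r (- rsum n (fun m => A i m * Em n A (b - r) m l)).
Proof. intros. replace (- rsum n (fun m => A i m * Em n A (b - r) m l)) with (rsum n (fun m => A i m * Em n A (b - r) m l) * (0 - 1)) by ring.
 apply (derivable_pt_lim_comp (fun r => b - r) (fun s => Em n A s i l)).
 apply dpl_minus. apply dpl_const. apply dpl_id.
 apply Em_dpl; auto. Qed.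

Lemma deriv_on_opp a b f f' : deriv_on a b f f' -> deriv_on a b (fun t => - f t) (fun t => - f' t).
Proof. intros H tau Ht. apply (lim1_ext (fun s => - ((f s - f tau) / (s - tau)))).
 intros s [_ Hs]. field. lra. apply limit_Ropp. apply H; auto. Qed.

Lemma sum_lt_diag n (E : mat) j : (j<n)%nat -> (forall m, (m<n)%nat -> 0 <= E m j) -> E j j <= rsum n (fun m => E m j).
Proof. intros. apply (rsum_term_le n (fun m => E m j) j); auto. Qed.

Section PE.
Variables (n : nat) (A J : mat) (T : R).
Hypothesis hA : Metzler n A.
Hypothesis hJ : nonneg_mat n J.
Hypothesis hT : 0 < T.

Lemma final_step (lam mu : vec) eps : pos_vec n lam -> 0 < eps ->
  (forall j, (j<n)%nat -> rsum n (fun i => mu i * Em n A T i j) <= lam j) ->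
  (forall m, (m<n)%nat -> vmat n lam J m <= mu m - eps) ->
  Lc n (mmul n J (Em n A T)).
Proof. intros Hl He Hmono Hj. exists lam. split; auto. intros j Hj0.
 rewrite vmat_mmul. unfold vmat at 1.
 assert (HE : forall m, (m<n)%nat -> 0 <= Em n A T m j) by (intros; apply Em_metzler; auto; lra).
 assert (HEjj : 0 < Em n A T j j) by (apply Em_metzler; auto; lra).
 apply Rle_lt_trans with (rsum n (fun m => (mu m - eps) * Em n A T m j)).
 apply rsum_le; intros m Hm. apply Rmult_le_compat_r; auto.
 rewrite (rsum_ext n _ (fun m => mu m * Em n A T m j - eps * Em n A T m j)) by (intros; ring).
 rewrite rsum_minus, rsum_scal. pose proof (sum_lt_diag n (Em n A T) j Hj0 HE). specialize (Hmono j Hj0).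
 assert (eps * Em n A T j j <= eps * rsum n (fun m => Em n A T m j)) by (apply Rmult_le_compat_l; lra).
 assert (0 < eps * Em n A T j j) by (apply Rmult_lt_0_compat; auto). lra. Qed.

Lemma Pe_to_Lc : (exists (zeta dzeta : R -> vec) (eps : R),
      (forall i, (i < n)%nat -> deriv_on 0 T (fun s => zeta s i) (fun s => dzeta s i)) /\
      pos_vec n (zeta T) /\ 0 < eps /\
      (forall tau, 0 <= tau <= T -> forall j, (j < n)%nat -> vmat n (zeta tau) A j - dzeta tau j <= 0) /\
      (forall j, (j < n)%nat -> vmat n (zeta T) J j - zeta 0 j + eps <= 0)) ->
  Lc n (mmul n J (Em n A T)).
Proof. intros [zeta [dzeta [eps [Hd [Hpos [Heps [Hode Hjump]]]]]]].
 apply (final_step (zeta T) (zeta 0) eps); auto.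
 2:{ intros m Hm. specialize (Hjump m Hm). lra. }
 intros j Hj.
 set (g := fun t => rsum n (fun i => zeta t i * Em n A (T - t) i j)).
 set (g' := fun t => rsum n (fun i => dzeta t i * Em n A (T - t) i j + zeta t i * (- rsum n (fun m => A i m * Em n A (T - t) m j)))).
 assert (Hg : deriv_on 0 T g g').
 { apply (deriv_on_rsum 0 T n (fun i t => zeta t i * Em n A (T - t) i j)
     (fun i t => dzeta t i * Em n A (T - t) i j + zeta t i * (- rsum n (fun m => A i m * Em n A (T - t) m j)))).
   intros i Hi. apply (deriv_on_mult_smooth 0 T (fun t => zeta t i) (fun t => dzeta t i) (fun t => Em n A (T - t) i j)).
   auto. intros tau. apply Em_refl_dpl_l; auto. }
 assert (Hg'p : forall t, 0 <= t <= T -> 0 <= g' t).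
 { intros t Ht. unfold g'.
   rewrite (rsum_ext n _ (fun i => dzeta t i * Em n A (T - t) i j - rsum n (fun m => zeta t i * A i m * Em n A (T - t) m j))).
   2:{ intros i Hi. rewrite (rsum_ext n (fun m => zeta t i * A i m * Em n A (T - t) m j) (fun m => zeta t i * (A i m * Em n A (T - t) m j))) by (intros; ring).
       rewrite rsum_scal. ring. }
   rewrite rsum_minus. rewrite rsum_swap.
   rewrite (rsum_ext n (fun m => rsum n (fun i => zeta t i * A i m * Em n A (T - t) m j)) (fun m => vmat n (zeta t) A m * Em n A (T - t) m j)).
   2:{ intros m Hm. unfold vmat. rewrite <- rsum_scal_r. auto. }
   rewrite <- rsum_minus. apply rsum_nonneg. intros m Hm.
   specialize (Hode t Ht m Hm). assert (0 <= Em n A (T - t) m j) by (apply Em_metzler; auto; lra).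
   replace (dzeta t m * Em n A (T - t) m j - vmat n (zeta t) A m * Em n A (T - t) m j)
     with ((dzeta t m - vmat n (zeta t) A m) * Em n A (T - t) m j) by ring.
   apply Rmult_le_pos; lra. }
 pose proof (deriv_on_mono 0 T g g' hT Hg Hg'p) as Hm.
 unfold g in Hm. rewrite Rminus_0_r, Rminus_eq_0 in Hm.
 rewrite (rsum_ext n (fun i => zeta T i * Em n A 0 i j) (fun i => zeta T i * idm i j)) in Hm by (intros; rewrite Em_0; auto).
 rewrite rsum_delta_r in Hm; auto. Qed.

Lemma Pf_to_Lc : (exists (xi dxi : R -> vec) (eps : R),
      (forall i, (i < n)%nat -> deriv_on 0 T (fun s => xi s i) (fun s => dxi s i)) /\
      pos_vec n (xi 0) /\ 0 < eps /\
      (forall tau, 0 <= tau <= T -> forall j, (j < n)%nat -> vmat n (xi tau) A j + dxi tau j <= 0) /\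
      (forall j, (j < n)%nat -> vmat n (xi 0) J j - xi T j + eps <= 0)) ->
  Lc n (mmul n J (Em n A T)).
Proof. intros [xi [dxi [eps [Hd [Hpos [Heps [Hode Hjump]]]]]]].
 apply (final_step (xi 0) (xi T) eps); auto.
 2:{ intros m Hm. specialize (Hjump m Hm). lra. }
 intros j Hj.
 set (g := fun t => rsum n (fun i => - xi t i * Em n A t i j)).
 set (g' := fun t => rsum n (fun i => - dxi t i * Em n A t i j + - xi t i * rsum n (fun m => A i m * Em n A t m j))).
 assert (Hg : deriv_on 0 T g g').
 { apply (deriv_on_rsum 0 T n (fun i t => - xi t i * Em n A t i j)
     (fun i t => - dxi t i * Em n A t i j + - xi t i * rsum n (fun m => A i m * Em n A t m j))).
   intros i Hi. apply (deriv_on_mult_smooth 0 T (fun t => - xi t i) (fun t => - dxi t i) (fun t => Em n A t i j)).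
   apply (deriv_on_opp 0 T (fun t => xi t i)); auto. intros tau. apply Em_dpl; auto. }
 assert (Hg'p : forall t, 0 <= t <= T -> 0 <= g' t).
 { intros t Ht. unfold g'.
   rewrite (rsum_ext n _ (fun i => - (dxi t i * Em n A t i j) - rsum n (fun m => xi t i * A i m * Em n A t m j))).
   2:{ intros i Hi. rewrite (rsum_ext n (fun m => xi t i * A i m * Em n A t m j) (fun m => xi t i * (A i m * Em n A t m j))) by (intros; ring).
       rewrite rsum_scal. ring. }
   rewrite rsum_minus. rewrite rsum_swap.
   rewrite (rsum_ext n (fun m => rsum n (fun i => xi t i * A i m * Em n A t m j)) (fun m => vmat n (xi t) A m * Em n A t m j)).
   2:{ intros m Hm. unfold vmat. rewrite <- rsum_scal_r. auto. }
   rewrite <- rsum_minus. apply rsum_nonneg. intros m Hm.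
   specialize (Hode t Ht m Hm). assert (0 <= Em n A t m j) by (apply Em_metzler; auto; lra).
   replace (- (dxi t m * Em n A t m j) - vmat n (xi t) A m * Em n A t m j)
     with (- (dxi t m + vmat n (xi t) A m) * Em n A t m j) by ring.
   apply Rmult_le_pos; lra. }
 pose proof (deriv_on_mono 0 T g g' hT Hg Hg'p) as Hm.
 unfold g in Hm.
 rewrite (rsum_ext n (fun i => - xi 0 i * Em n A 0 i j) (fun i => (- xi 0 i) * idm i j)) in Hm by (intros; rewrite Em_0; auto).
 rewrite (rsum_delta_r n (fun i => - xi 0 i)) in Hm; auto.
 rewrite (rsum_ext n (fun i => - xi T i * Em n A T i j) (fun i => - (xi T i * Em n A T i j))) in Hm by (intros; ring).
 assert (rsum n (fun i => - (xi T i * Em n A T i j)) = - rsum n (fun i => xi T i * Em n A T i j)).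
 { rewrite (rsum_ext n (fun i => - (xi T i * Em n A T i j)) (fun i => -1 * (xi T i * Em n A T i j))) by (intros; ring).
   rewrite rsum_scal. ring. }
 lra. Qed.
End PE.

Section PE2.
Variables (n : nat) (A J : mat) (T : R).
Hypothesis hA : Metzler n A.
Hypothesis hJ : nonneg_mat n J.
Hypothesis hT : 0 < T.

Lemma vmat_E_pos (v : vec) s : pos_vec n v -> 0 <= s -> pos_vec n (fun i => vmat n v (Em n A s) i).
Proof. intros Hv Hs i Hi. unfold vmat.
 apply Rlt_le_trans with (v i * Em n A s i i).
 apply Rmult_lt_0_compat; auto. apply Em_metzler; auto.
 apply (rsum_term_le n (fun l => v l * Em n A s l i) i); auto.
 intros l Hl. apply Rmult_le_pos. apply Rlt_le; auto. apply Em_metzler; auto. Qed.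

Lemma vmat_Em0 v i : (i<n)%nat -> vmat n v (Em n A 0) i = v i.
Proof. intros Hi. unfold vmat. rewrite (rsum_ext n _ (fun l => v l * idm l i)) by (intros; rewrite Em_0; auto).
 apply rsum_delta_r; auto. Qed.

Lemma Lc_gap : Lc n (mmul n (Em n A T) J) -> exists v eps, pos_vec n v /\ 0 < eps /\
   forall j, (j<n)%nat -> vmat n v (mmul n (Em n A T) J) j - v j + eps <= 0.
Proof. intros [v [Hv H]]. destruct (fin_min n (fun j => v j - vmat n v (mmul n (Em n A T) J) j)) as [e [He H2]].
 intros j Hj; specialize (H j Hj); lra. exists v, e. split; auto. split; auto. intros j Hj; specialize (H2 j Hj); lra. Qed.

Lemma Lc_to_Pe : Lc n (mmul n (Em n A T) J) -> (exists (zeta dzeta : R -> vec) (eps : R),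
      (forall i, (i < n)%nat -> deriv_on 0 T (fun s => zeta s i) (fun s => dzeta s i)) /\
      pos_vec n (zeta T) /\ 0 < eps /\
      (forall tau, 0 <= tau <= T -> forall j, (j < n)%nat -> vmat n (zeta tau) A j - dzeta tau j <= 0) /\
      (forall j, (j < n)%nat -> vmat n (zeta T) J j - zeta 0 j + eps <= 0)).
Proof. intros HL. destruct (Lc_gap HL) as [v [eps [Hv [He Hg]]]].
 exists (fun s i => vmat n v (Em n A s) i), (fun s i => vmat n v (fun l i => rsum n (fun m => Em n A s l m * A m i)) i), eps.
 split; [|split; [|split; [|split]]].
 - intros i Hi. apply dpl_deriv_on. intros tau _. unfold vmat.
   apply (dpl_rsum n (fun l s => v l * Em n A s l i)). intros l Hl. apply dpl_scal. apply Em_dpl_r; auto.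
 - apply vmat_E_pos; auto; lra.
 - auto.
 - intros tau Ht j Hj. unfold vmat.
   rewrite (rsum_ext n (fun i => rsum n (fun i0 => v i0 * Em n A tau i0 i) * A i j) (fun i => rsum n (fun l => v l * Em n A tau l i * A i j))) by (intros; rewrite <- rsum_scal_r; auto).
   rewrite rsum_swap.
   rewrite (rsum_ext n (fun l => v l * rsum n (fun m => Em n A tau l m * A m j)) (fun l => rsum n (fun i => v l * Em n A tau l i * A i j))).
   rewrite Rminus_eq_0; lra.
   intros; rewrite <- rsum_scal; apply rsum_ext; intros; ring.
 - intros j Hj. specialize (Hg j Hj). rewrite vmat_Em0 by auto.
   change (vmat n (vmat n v (Em n A T)) J j - v j + eps <= 0).
   rewrite <- vmat_mmul. auto. Qed.

Lemma Lc_to_Pf : Lc n (mmul n (Em n A T) J) -> (exists (xi dxi : R -> vec) (eps : R),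
      (forall i, (i < n)%nat -> deriv_on 0 T (fun s => xi s i) (fun s => dxi s i)) /\
      pos_vec n (xi 0) /\ 0 < eps /\
      (forall tau, 0 <= tau <= T -> forall j, (j < n)%nat -> vmat n (xi tau) A j + dxi tau j <= 0) /\
      (forall j, (j < n)%nat -> vmat n (xi 0) J j - xi T j + eps <= 0)).
Proof. intros HL. destruct (Lc_gap HL) as [v [eps [Hv [He Hg]]]].
 exists (fun s i => vmat n v (Em n A (T - s)) i), (fun s i => - vmat n v (fun l i => rsum n (fun m => Em n A (T - s) l m * A m i)) i), eps.
 split; [|split; [|split; [|split]]].
 - intros i Hi. apply dpl_deriv_on. intros tau _. unfold vmat.
   replace (- rsum n (fun i0 => v i0 * rsum n (fun m => Em n A (T - tau) i0 m * A m i)))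
     with (rsum n (fun l => v l * (- rsum n (fun m => Em n A (T - tau) l m * A m i)))).
   apply (dpl_rsum n (fun l s => v l * Em n A (T - s) l i)). intros l Hl. apply dpl_scal. apply Em_refl_dpl; auto.
   rewrite (rsum_ext n (fun l => v l * (- _)) (fun l => -1 * (v l * rsum n (fun m => Em n A (T - tau) l m * A m i)))) by (intros; ring).
   rewrite rsum_scal; ring.
 - rewrite Rminus_0_r. apply vmat_E_pos; auto; lra.
 - auto.
 - intros tau Ht j Hj. unfold vmat.
   rewrite (rsum_ext n (fun i => rsum n (fun i0 => v i0 * Em n A (T - tau) i0 i) * A i j) (fun i => rsum n (fun l => v l * Em n A (T - tau) l i * A i j))) by (intros; rewrite <- rsum_scal_r; auto).
   rewrite rsum_swap.
   rewrite (rsum_ext n (fun l => v l * rsum n (fun m => Em n A (T - tau) l m * A m j)) (fun l => rsum n (fun i => v l * Em n A (T - tau) l i * A i j))).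
   lra.
   intros; rewrite <- rsum_scal; apply rsum_ext; intros; ring.
 - intros j Hj. specialize (Hg j Hj). rewrite Rminus_eq_0, vmat_Em0 by auto. rewrite Rminus_0_r.
   change (vmat n (vmat n v (Em n A T)) J j - v j + eps <= 0).
   rewrite <- vmat_mmul. auto. Qed.
End PE2.

Definition meq n (M N : mat) := forall i j, (i<n)%nat -> (j<n)%nat -> M i j = N i j.

Lemma mpow_meq n M N k : meq n M N -> meq n (mpow n M k) (mpow n N k).
Proof. intros H. induction k; intros i j Hi Hj; simpl; auto. apply mmul_ext; intros; auto. Qed.

Lemma Dk_meq n M N : meq n M N -> Dk n M -> Dk n N.
Proof. intros H HD eps He. destruct (HD eps He) as [K HK]. exists K. intros. rewrite <- (mpow_meq n M N K H); auto. Qed.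
Lemma Lc_meq n M N : meq n M N -> Lc n M -> Lc n N.
Proof. intros H [l [Hl HL]]. exists l; split; auto. intros j Hj. rewrite <- (vmat_ext n M N l l); auto.
 Qed.
Lemma Rc_meq n M N : meq n M N -> Rc n M -> Rc n N.
Proof. intros H [l [Hl HL]]. exists l; split; auto. intros j Hj. rewrite <- (mvec_ext n M N l l); auto. Qed.
Lemma Schur_meq n M N : meq n M N -> Schur_stable n M -> Schur_stable n N.
Proof. intros H HS a b al be Hnz Ha Hb. apply (HS a b al be Hnz).
 intros i Hi. rewrite <- (Ha i Hi). apply mvec_ext; auto.
 intros i Hi. rewrite <- (Hb i Hi). apply mvec_ext; auto. Qed.
Lemma nonneg_meq n M N : meq n M N -> nonneg_mat n M -> nonneg_mat n N.
Proof. intros H HM i j Hi Hj. rewrite <- H; auto. Qed.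
Lemma meq_sym n M N : meq n M N -> meq n N M.
Proof. intros H i j Hi Hj; symmetry; auto. Qed.

Lemma mpow_swap n P Q k i j : (i<n)%nat -> (j<n)%nat ->
  mpow n (mmul n Q P) (S k) i j = mmul n Q (mmul n (mpow n (mmul n P Q) k) P) i j.
Proof. revert i j. induction k; intros i j Hi Hj.
 - simpl (mpow n (mmul n Q P) 1). rewrite mmul_idm_r by auto. apply mmul_ext; auto.
   intros l Hl. simpl. rewrite mmul_idm_l; auto.
 - change (mpow n (mmul n Q P) (S (S k)) i j) with (mmul n (mmul n Q P) (mpow n (mmul n Q P) (S k)) i j).
   rewrite (mmul_ext n (mmul n Q P) (mmul n Q P) _ (mmul n Q (mmul n (mpow n (mmul n P Q) k) P))) by auto.
   rewrite mmul_assoc. apply mmul_ext; auto. intros l Hl.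
   change (mpow n (mmul n P Q) (S k)) with (mmul n (mmul n P Q) (mpow n (mmul n P Q) k)).
   rewrite (mmul_assoc n (mmul n P Q) (mpow n (mmul n P Q) k) P).
   rewrite <- (mmul_assoc n P Q (mmul n (mpow n (mmul n P Q) k) P)). reflexivity. Qed.

Lemma Dk_swap n P Q : Dk n (mmul n P Q) -> Dk n (mmul n Q P).
Proof. intros HD eps He.
 set (cP := msz n P). set (cQ := msz n Q).
 assert (HcP : 0 <= cP) by apply msz_nonneg. assert (HcQ : 0 <= cQ) by apply msz_nonneg.
 destruct (HD (eps / ((cP + 1) * (cQ + 1)))) as [K HK]. apply Rdiv_lt_0_compat; nra.
 exists (S K). intros i j Hi Hj. rewrite mpow_swap by auto. unfold mmul at 1.
 set (d := eps / ((cP + 1) * (cQ + 1))).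
 assert (Hd0 : 0 < d) by (unfold d; apply Rdiv_lt_0_compat; nra).
 assert (Hin : forall l, (l<n)%nat -> Rabs (mmul n (mpow n (mmul n P Q) K) P l j) <= d * cP).
 { intros l Hl. unfold mmul at 1. eapply Rle_trans. apply rsum_abs.
   apply Rle_trans with (rsum n (fun b => d * Rabs (P b j))).
   apply rsum_le; intros b Hb. rewrite Rabs_mult. apply Rmult_le_compat_r. apply Rabs_pos. left; apply HK; auto.
   rewrite rsum_scal. apply Rmult_le_compat_l. lra. apply msz_col; auto. }
 eapply Rle_lt_trans. apply rsum_abs.
 apply Rle_lt_trans with (rsum n (fun a => Rabs (Q i a) * (d * cP))).
 apply rsum_le; intros a Ha. rewrite Rabs_mult. apply Rmult_le_compat_l. apply Rabs_pos. auto.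
 rewrite rsum_scal_r.
 apply Rle_lt_trans with (cQ * (d * cP)). apply Rmult_le_compat_r. nra. apply msz_row; auto.
 unfold d. replace (cQ * (eps / ((cP + 1) * (cQ + 1)) * cP)) with (eps * (cQ * cP / ((cP + 1) * (cQ + 1)))) by (field; nra).
 assert (cQ * cP / ((cP + 1) * (cQ + 1)) < 1).
 { apply (Rmult_lt_reg_r ((cP + 1) * (cQ + 1))). nra. unfold Rdiv. rewrite Rmult_assoc, Rinv_l by nra. nra. }
 nra. Qed.

Lemma Pc_iff n M : (exists lam : vec, pos_vec n lam /\ neg_vec n (vmat n lam (msub M idm))) <-> Lc n M.
Proof. assert (E : forall lam j, (j<n)%nat -> vmat n lam (msub M idm) j = vmat n lam M j - lam j).
 { intros lam j Hj. unfold vmat, msub. rewrite (rsum_ext n _ (fun i => lam i * M i j - lam i * idm i j)) by (intros; ring).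
   rewrite rsum_minus, rsum_delta_r; auto. }
 split; intros [lam [Hl H]]; exists lam; split; auto; intros j Hj; specialize (H j Hj); rewrite E in *; auto; lra. Qed.

Lemma Pd_iff n M : (exists lam : vec, pos_vec n lam /\ neg_vec n (mvec n (msub M idm) lam)) <-> Rc n M.
Proof. assert (E : forall lam i, (i<n)%nat -> mvec n (msub M idm) lam i = mvec n M lam i - lam i).
 { intros lam i Hi. unfold mvec, msub. rewrite (rsum_ext n _ (fun j => M i j * lam j - idm i j * lam j)) by (intros; ring).
   rewrite rsum_minus, rsum_delta_l; auto. }
 split; intros [lam [Hl H]]; exists lam; split; auto; intros j Hj; specialize (H j Hj); rewrite E in *; auto; lra. Qed.

Lemma Pb_iff n M : (exists lam mu : vec, pos_vec n lam /\ pos_vec n mu /\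
      forall x : vec, nonneg_vec n x -> dot n lam (mvec n M x) - dot n lam x <= - dot n mu x) <-> Lc n M.
Proof. assert (E : forall lam x, dot n lam (mvec n M x) = rsum n (fun j => vmat n lam M j * x j)).
 { intros lam x. unfold dot, mvec, vmat.
   rewrite (rsum_ext n (fun i => lam i * rsum n (fun j => M i j * x j)) (fun i => rsum n (fun j => lam i * M i j * x j))) by (intros; rewrite <- rsum_scal; apply rsum_ext; intros; ring).
   rewrite rsum_swap. apply rsum_ext; intros. rewrite <- rsum_scal_r; auto. }
 split.
 - intros [lam [mu [Hl [Hm H]]]]. exists lam. split; auto. intros j Hj.
   set (e := fun k : nat => if Nat.eq_dec k j then 1 else 0).
   assert (He : nonneg_vec n e) by (intros k _; unfold e; destruct (Nat.eq_dec k j); lra).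
   specialize (H e He). rewrite E in H. unfold dot in H.
   assert (Hd : forall f : vec, rsum n (fun k => f k * e k) = f j).
   { intros f. rewrite <- (rsum_delta_r n f j Hj). apply rsum_ext; intros k _. unfold e, idm.
     destruct (Nat.eq_dec k j); auto. }
   rewrite (Hd (vmat n lam M)), (Hd lam), (Hd mu) in H. specialize (Hm j Hj). lra.
 - intros [lam [Hl H]]. exists lam, (fun j => lam j - vmat n lam M j). split; auto. split.
   intros j Hj; specialize (H j Hj); lra.
   intros x Hx. rewrite E. unfold dot. rewrite <- rsum_minus.
   rewrite <- (Rmult_1_l (rsum n (fun i => (lam i - vmat n lam M i) * x i))). rewrite Ropp_mult_distr_l, <- rsum_scal.
   apply rsum_le; intros; apply Req_le; ring. Qed.

Theorem theorem2 (n : nat) (A J : mat) (Tbar : R)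
  (hA : Metzler n A) (hJ : nonneg_mat n J) (hT : 0 < Tbar) :
  let M := mmul n J (mexp n (mscale Tbar A)) in
  let Pa := AS_constant_dwell n A J Tbar in
  let Pb := exists lam mu : vec, pos_vec n lam /\ pos_vec n mu /\
      forall x : vec, nonneg_vec n x ->
        dot n lam (mvec n M x) - dot n lam x <= - dot n mu x in
  let Pc := exists lam : vec, pos_vec n lam /\
      neg_vec n (vmat n lam (msub M idm)) in
  let Pc' := Schur_stable n M in
  let Pd := exists lam : vec, pos_vec n lam /\
      neg_vec n (mvec n (msub M idm) lam) in
  let Pd' := Schur_stable n (mmul n (mexp n (mscale Tbar (mtr A))) (mtr J)) in
  let Pe := exists (zeta dzeta : R -> vec) (eps : R),
      (forall i, (i < n)%nat ->
         deriv_on 0 Tbar (fun s => zeta s i) (fun s => dzeta s i)) /\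
      pos_vec n (zeta Tbar) /\ 0 < eps /\
      (forall tau, 0 <= tau <= Tbar -> forall j, (j < n)%nat ->
         vmat n (zeta tau) A j - dzeta tau j <= 0) /\
      (forall j, (j < n)%nat -> vmat n (zeta Tbar) J j - zeta 0 j + eps <= 0) in
  let Pf := exists (xi dxi : R -> vec) (eps : R),
      (forall i, (i < n)%nat ->
         deriv_on 0 Tbar (fun s => xi s i) (fun s => dxi s i)) /\
      pos_vec n (xi 0) /\ 0 < eps /\
      (forall tau, 0 <= tau <= Tbar -> forall j, (j < n)%nat ->
         vmat n (xi tau) A j + dxi tau j <= 0) /\
      (forall j, (j < n)%nat -> vmat n (xi 0) J j - xi Tbar j + eps <= 0) in
  (Pa <-> Pb) /\ (Pa <-> Pc) /\ (Pa <-> Pc') /\ (Pa <-> Pd) /\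
  (Pa <-> Pd') /\ (Pa <-> Pe) /\ (Pa <-> Pf).
Proof.
 intros M Pa Pb Pc Pc' Pd Pd' Pe Pf.
 set (E := Em n A Tbar). set (M2 := mmul n J E). set (Q := mmul n E J).
 assert (HE : nonneg_mat n E) by (intros i j Hi Hj; apply Em_metzler; auto; lra).
 assert (HM2 : nonneg_mat n M2) by (intros i j Hi Hj; unfold M2, mmul; apply rsum_nonneg; intros; apply Rmult_le_pos; auto).
 assert (HQ : nonneg_mat n Q) by (intros i j Hi Hj; unfold Q, mmul; apply rsum_nonneg; intros; apply Rmult_le_pos; auto).
 assert (HMM : meq n M M2).
 { intros i j Hi Hj. unfold M, M2, E. apply mmul_ext; auto. intros; apply mexp_Em; auto. }
 assert (HdM : meq n (mmul n (mexp n (mscale Tbar (mtr A))) (mtr J)) (mtr M2)).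
 { intros i j Hi Hj. unfold M2, mmul, E. change (mtr (fun i j => rsum n (fun k => J i k * Em n A Tbar k j)) i j) with (rsum n (fun k => J j k * Em n A Tbar k i)).
   apply rsum_ext. intros k Hk.
   rewrite mexp_Em, Em_tr by auto. unfold mtr. ring. }
 assert (HDkQ : Dk n Q <-> Dk n M2).
 { split; intros H. apply (Dk_swap n E J); auto. apply (Dk_swap n J E); auto. }
 assert (eA : Pa <-> Dk n M2).
 { rewrite <- HDkQ. split. apply Pa_to_Dk; auto. intros H. apply Rc_to_Pa; auto. apply Dk_Rc; auto. }
 assert (eL : Lc n M <-> Dk n M2).
 { split; intros H. apply Lc_Dk; auto. apply (Lc_meq n M M2); auto.
   apply (Lc_meq n M2 M). apply meq_sym; auto. apply Dk_Lc; auto. }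
 assert (eR : Rc n M <-> Dk n M2).
 { split; intros H. apply Rc_Dk; auto. apply (Rc_meq n M M2); auto.
   apply (Rc_meq n M2 M). apply meq_sym; auto. apply Dk_Rc; auto. }
 assert (eB : Pb <-> Dk n M2) by (unfold Pb; rewrite Pb_iff; auto).
 assert (eC : Pc <-> Dk n M2) by (unfold Pc; rewrite Pc_iff; auto).
 assert (eD : Pd <-> Dk n M2) by (unfold Pd; rewrite Pd_iff; auto).
 assert (eC' : Pc' <-> Dk n M2).
 { unfold Pc'. split; intros H.
   apply Rc_Dk; auto. apply Schur_Rc; auto. apply (Schur_meq n M M2); auto.
   apply (Schur_meq n M2 M). apply meq_sym; auto. apply Lc_Schur; auto. apply Dk_Lc; auto. }
 assert (HtM2 : nonneg_mat n (mtr M2)) by (apply nonneg_tr; auto).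
 assert (eD' : Pd' <-> Dk n M2).
 { unfold Pd'. split; intros H.
   - apply Schur_meq with (N := mtr M2) in H; auto.
     apply Schur_Rc in H; auto. apply Rc_Dk in H; auto. apply Dk_tr in H. exact H.
   - apply (Schur_meq n (mtr M2)). apply meq_sym; auto.
     apply Lc_Schur; auto. apply Dk_Lc; auto. apply Dk_tr; auto. }
 assert (eE : Pe <-> Dk n M2).
 { unfold Pe. split; intros H.
   apply Lc_Dk; auto. apply (Pe_to_Lc n A J Tbar hA hT H).
   apply (Lc_to_Pe n A J Tbar hA hT). apply Dk_Lc; auto. apply HDkQ; auto. }
 assert (eF : Pf <-> Dk n M2).
 { unfold Pf. split; intros H.
   apply Lc_Dk; auto. apply (Pf_to_Lc n A J Tbar hA hT H).
   apply (Lc_to_Pf n A J Tbar hA hT). apply Dk_Lc; auto. apply HDkQ; auto. }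
 rewrite eA, eB, eC, eC', eD, eD', eE, eF. tauto.
Qed.
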